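(* Let $[t_0,t_1]$ be an admissible segment of $\mathbf r$ with associated tetrahedron $\mathbf r_0\mathbf r_1\mathbf r_2\mathbf r_3$. For each $t^\star\in(t_0,t_1)$ the osculating plane $O(t^\star)$ meets the lines $\mathbf r_0\mathbf r_1$, $\mathbf r_1\mathbf r_2$, $\mathbf r_2\mathbf r_3$ in points $\mathbf r_{01},\mathbf r_{12},\mathbf r_{23}$ (depending on $t^\star$), and the distances $\|\mathbf r_0\mathbf r_{01}\|$, $\|\mathbf r_1\mathbf r_{12}\|$, $\|\mathbf r_2\mathbf r_{23}\|$ are strictly monotone functions of $t^\star\in(t_0,t_1)$.
   Context: Setting: $\mathbf r(t)=(x(t),y(t),z(t))$ with $x,y,z$ rational functions with real coefficients whose denominators do not vanish on the parameter interval, properly parametrized, and not contained in a plane. Curvature $\kappa=\|\mathbf r'\times\mathbf r''\|/\|\mathbf r'\|^3$; torsion $\tau$ vanishes exactly where $\det(\mathbf r',\mathbf r'',\mathbf r''')=0$. Unit tangent $\boldsymbol\alpha=\mathbf r'/\|\mathbf r'\|$, unit binormal $\boldsymbol\gamma=\mathbf r'\times\mathbf r''/\|\mathbf r'\times\mathbf r''\|$; one-sided limits $\boldsymbol\alpha^{\pm}(s)=\lim_{t\to s^\pm}\boldsymbol\alpha(t)$, $\boldsymbol\gamma^{\pm}(s)=\lim_{t\to s^\pm}\boldsymbol\gamma(t)$; tangent lines $T^{\pm}(s)=\{\mathbf r(s)+\lambda\boldsymbol\alpha^{\pm}(s)\}$, osculating planes $O^{\pm}(s)=\{X:(X-\mathbf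 r(s))\cdot\boldsymbol\gamma^{\pm}(s)=0\}$ (written $O(s)$ at interior ordinary points). A point is singular if it corresponds to more than one parameter counted with multiplicity; character points are singular points, inflections ($\kappa=0$) and torsion-vanishing points ($\tau=0$). Associated tetrahedron of $[a,b]$: vertices $\mathbf r(a)$, $T^+(a)\cap L$, $T^-(b)\cap L$, $\mathbf r(b)$ where $L=O^+(a)\cap O^-(b)$. Admissible segment: $t_0<t_1$, no parameter in $(t_0,t_1]$ gives a character point, and for all $t_0\le s_1<s_2\le t_1$: (I) $\boldsymbol\alpha^+(s_1)\cdot\boldsymbol\gamma^-(s_2)\ne0$ and $\boldsymbol\alpha^-(s_2)\cdot\boldsymbol\gamma^+(s_1)\ne0$; (II) $(\boldsymbol\alpha^+(s_1)\times(\mathbf r(s_2)-\mathbf r(s_1)))\cdot\boldsymbol\alpha^-(s_2)\ne0$; (III) $(\mathbf r(s_1)-\mathbf r(s_2))\cdot\boldsymbol\gamma^-(s_2)\ne0$ and $(\mathbf r(s_2)-\mathbf r(s_1))\cdot\boldsymbol\gamma^+(s_1)\ne0$; and (IV) for all $t_0\le s_1<s_2<s_3\le t_1$, $\det(\boldsymbol\alpha(s_1),\boldsymbol\alpha(s_2),\boldsymbol\alpha(s_3))\ne0$ (one-sided limits used at $t_0,t_1$). *)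

(* Defs.v *)
From Stdlib Require Import Reals List.
Open Scope R_scope.

Record V3 := mkV3 { vx : R; vy : R; vz : R }.
Definition vadd (u v : V3) := mkV3 (vx u + vx v) (vy u + vy v) (vz u + vz v).
Definition vsub (u v : V3) := mkV3 (vx u - vx v) (vy u - vy v) (vz u - vz v).
Definition vscale (k : R) (u : V3) := mkV3 (k * vx u) (k * vy u) (k * vz u).
Definition dot (u v : V3) := vx u * vx v + vy u * vy v + vz u * vz v.
Definition cross (u v : V3) :=
  mkV3 (vy u * vz v - vz u * vy v) (vz u * vx v - vx u * vz v) (vx u * vy v - vy u * vx v).
Definition vnorm (u : V3) := sqrt (dot u u).
Definition det3 (a b c : V3) := dot a (cross b c).
Definition v0 := mkV3 0 0 0.

(* ---------- real polynomials (coefficient lists, constant term first) ---------- *)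
Definition poly := list R.
Definition peval (p : poly) (x : R) : R := fold_right (fun a acc => a + x * acc) 0 p.
Fixpoint padd (p q : poly) : poly :=
  match p, q with
  | nil, _ => q
  | _, nil => p
  | a :: p', b :: q' => (a + b) :: padd p' q'
  end.
Definition pscale (k : R) (p : poly) : poly := map (fun a => k * a) p.
Fixpoint pmul (p q : poly) : poly :=
  match p with
  | nil => nil
  | a :: p' => padd (pscale a q) (0 :: pmul p' q)
  end.
Definition psub (p q : poly) : poly := padd p (pscale (-1) q).
Fixpoint pderiv_aux (k : nat) (p : poly) : poly :=
  match p with
  | nil => nil
  | a :: p' => (INR k * a) :: pderiv_aux (S k) p'
  end.
Definition pderiv (p : poly) : poly :=
  match p with nil => nil | _ :: p' => pderiv_aux 1 p' end.

Definition C := (R * R)%type.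
Definition cadd (z w : C) : C := (fst z + fst w, snd z + snd w).
Definition cmul (z w : C) : C := (fst z * fst w - snd z * snd w, fst z * snd w + snd z * fst w).
Definition ofR (x : R) : C := (x, 0).
Definition pevalC (p : poly) (z : C) : C :=
  fold_right (fun a acc => cadd (ofR a) (cmul z acc)) (ofR 0) p.

Definition ratf := (poly * poly)%type.   (* (numerator, denominator) *)
Definition rf_eval (f : ratf) (t : R) : R := peval (fst f) t / peval (snd f) t.
Definition rf_deriv (f : ratf) : ratf :=
  (psub (pmul (pderiv (fst f)) (snd f)) (pmul (fst f) (pderiv (snd f))),
   pmul (snd f) (snd f)).

Record curve := mkCurve { cx : ratf; cy : ratf; cz : ratf }.
Definition cmap (F : ratf -> ratf) (r : curve) := mkCurve (F (cx r)) (F (cy r)) (F (cz r)).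
Definition pos (r : curve) (t : R) : V3 := mkV3 (rf_eval (cx r) t) (rf_eval (cy r) t) (rf_eval (cz r) t).
Definition rD (r : curve) := cmap rf_deriv r.
Definition d1 (r : curve) (t : R) := pos (rD r) t.
Definition d2 (r : curve) (t : R) := pos (rD (rD r)) t.
Definition d3 (r : curve) (t : R) := pos (rD (rD (rD r))) t.

Definition defined_at (r : curve) (t : R) : Prop :=
  peval (snd (cx r)) t <> 0 /\ peval (snd (cy r)) t <> 0 /\ peval (snd (cz r)) t <> 0.
Definition defined_atC (r : curve) (z : C) : Prop :=
  pevalC (snd (cx r)) z <> ofR 0 /\ pevalC (snd (cy r)) z <> ofR 0 /\ pevalC (snd (cz r)) z <> ofR 0.
(* r(z) = r(w) for complex parameters, written by cross-multiplication *)
Definition same_pointC (r : curve) (z w : C) : Prop :=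
  forall f, (f = cx r \/ f = cy r \/ f = cz r) ->
    cmul (pevalC (fst f) z) (pevalC (snd f) w) = cmul (pevalC (fst f) w) (pevalC (snd f) z).

Definition proper_param (r : curve) : Prop :=
  exists E : list C, forall z w : C, ~ In z E -> ~ In w E ->
    defined_atC r z -> defined_atC r w -> same_pointC r z w -> z = w.

Definition non_planar (r : curve) : Prop :=
  ~ exists (n : V3) (c : R), n <> v0 /\ forall t, defined_at r t -> dot n (pos r t) = c.

Definition curvature (r : curve) (t : R) : R :=
  vnorm (cross (d1 r t) (d2 r t)) / (vnorm (d1 r t)) ^ 3.
Definition torsion_vanishes (r : curve) (t : R) : Prop :=
  det3 (d1 r t) (d2 r t) (d3 r t) = 0.
Definition alpha (r : curve) (t : R) : V3 := vscale (/ vnorm (d1 r t)) (d1 r t).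
Definition gamma (r : curve) (t : R) : V3 :=
  vscale (/ vnorm (cross (d1 r t) (d2 r t))) (cross (d1 r t) (d2 r t)).

Definition rlim (f : R -> V3) (s : R) (v : V3) : Prop :=
  forall eps, 0 < eps -> exists del, 0 < del /\
    forall t, s < t < s + del -> vnorm (vsub (f t) v) < eps.
Definition llim (f : R -> V3) (s : R) (v : V3) : Prop :=
  forall eps, 0 < eps -> exists del, 0 < del /\
    forall t, s - del < t < s -> vnorm (vsub (f t) v) < eps.

(* the point r(s) corresponds to more than one parameter counted with multiplicity:
   either another (complex) parameter gives the same point, or s has multiplicity > 1
   (r'(s) = 0) *)
Definition singular_param (r : curve) (s : R) : Prop :=
  d1 r s = v0 \/
  exists z : C, z <> ofR s /\ defined_atC r z /\ same_pointC r z (ofR s).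
Definition character_param (r : curve) (s : R) : Prop :=
  singular_param r s \/ curvature r s = 0 \/ torsion_vanishes r s.

Definition admissible (r : curve) (t0 t1 : R) : Prop :=
  t0 < t1 /\
  (forall s, t0 < s <= t1 -> ~ character_param r s) /\
  (* (I) *)
  (forall s1 s2 a g, t0 <= s1 < s2 -> s2 <= t1 ->
     rlim (alpha r) s1 a -> llim (gamma r) s2 g -> dot a g <> 0) /\
  (forall s1 s2 a g, t0 <= s1 < s2 -> s2 <= t1 ->
     llim (alpha r) s2 a -> rlim (gamma r) s1 g -> dot a g <> 0) /\
  (* (II) *)
  (forall s1 s2 a1 a2, t0 <= s1 < s2 -> s2 <= t1 ->
     rlim (alpha r) s1 a1 -> llim (alpha r) s2 a2 ->
     dot (cross a1 (vsub (pos r s2) (pos r s1))) a2 <> 0) /\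
  (* (III) *)
  (forall s1 s2 g, t0 <= s1 < s2 -> s2 <= t1 ->
     llim (gamma r) s2 g -> dot (vsub (pos r s1) (pos r s2)) g <> 0) /\
  (forall s1 s2 g, t0 <= s1 < s2 -> s2 <= t1 ->
     rlim (gamma r) s1 g -> dot (vsub (pos r s2) (pos r s1)) g <> 0) /\
  (* (IV), one-sided limits at the ends *)
  (forall s1 s2 s3 a1 a3, t0 <= s1 < s2 -> s2 < s3 <= t1 ->
     rlim (alpha r) s1 a1 -> llim (alpha r) s3 a3 ->
     det3 a1 (alpha r s2) a3 <> 0).

Definition on_line (P Q X : V3) : Prop := exists l : R, X = vadd P (vscale l (vsub Q P)).
Definition on_plane (P n X : V3) : Prop := dot (vsub X P) n = 0.
Definition on_tangent (P a X : V3) : Prop := exists l : R, X = vadd P (vscale l a).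

(* r0 r1 r2 r3 is the associated tetrahedron of [t0,t1]:
   r0 = r(t0), r3 = r(t1), r1 = T^+(t0) ∩ L, r2 = T^-(t1) ∩ L, L = O^+(t0) ∩ O^-(t1) *)
Definition assoc_tetrahedron (r : curve) (t0 t1 : R) (r0 r1 r2 r3 : V3) : Prop :=
  exists a0 g0 a1 g1 : V3,
    rlim (alpha r) t0 a0 /\ rlim (gamma r) t0 g0 /\
    llim (alpha r) t1 a1 /\ llim (gamma r) t1 g1 /\
    r0 = pos r t0 /\ r3 = pos r t1 /\
    on_tangent (pos r t0) a0 r1 /\ on_plane (pos r t0) g0 r1 /\ on_plane (pos r t1) g1 r1 /\
    on_tangent (pos r t1) a1 r2 /\ on_plane (pos r t0) g0 r2 /\ on_plane (pos r t1) g1 r2.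

Definition unique_meet (r : curve) (t : R) (P Q X : V3) : Prop :=
  on_line P Q X /\ on_plane (pos r t) (gamma r t) X /\
  forall Y, on_line P Q Y -> on_plane (pos r t) (gamma r t) Y -> Y = X.

Definition strictly_monotone_on (a b : R) (f : R -> R) : Prop :=
  (forall x y, a < x -> x < y -> y < b -> f x < f y) \/
  (forall x y, a < x -> x < y -> y < b -> f y < f x).

(* Main.v *)
Require Import Defs.
From Stdlib Require Import Reals List.
From Stdlib Require Import Lra Ranalysis1 Ranalysis5.
Import Defs.
Open Scope R_scope.

Lemma sign_closed f a b : a <= b ->
  (forall x, a <= x <= b -> continuity_pt f x) ->
  (forall x, a <= x <= b -> f x <> 0) -> f a * f b > 0.
Proof.
  intros Hab Hc Hn.
  destruct (Req_dec a b) as [E|E].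
  - subst. assert (f b <> 0) by (apply Hn; lra). nra.
  - assert (Hlt : a < b) by lra.
    assert (Ha : f a <> 0) by (apply Hn; lra).
    assert (Hb : f b <> 0) by (apply Hn; lra).
    destruct (Rlt_or_le (f a) 0) as [Fa|Fa]; destruct (Rlt_or_le (f b) 0) as [Fb|Fb].
    + nra.
    + exfalso. destruct (IVT_interv f a b Hc Hlt Fa) as [z [Hz Fz]]; [lra|].
      exact (Hn z Hz Fz).
    + exfalso. destruct (IVT_interv (fun x => - f x) a b) as [z [Hz Fz]]; try lra.
      * intros x Hx. apply continuity_pt_opp. apply Hc; auto.
      * apply (Hn z Hz). lra.
    + nra.
Qed.

Lemma sign_interval f a b x y : a <= x <= b -> a <= y <= b ->
  (forall x, a <= x <= b -> continuity_pt f x) ->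
  (forall x, a <= x <= b -> f x <> 0) -> f x * f y > 0.
Proof.
  intros Hx Hy Hc Hn.
  destruct (Rle_or_lt x y) as [H|H].
  - apply sign_closed; auto; intros; [apply Hc|apply Hn]; lra.
  - rewrite Rmult_comm. apply sign_closed; auto; [lra| |]; intros; [apply Hc|apply Hn]; lra.
Qed.

Lemma sign_open f a b x y : a < x < b -> a < y < b ->
  (forall x, a < x < b -> continuity_pt f x) ->
  (forall x, a < x < b -> f x <> 0) -> f x * f y > 0.
Proof.
  intros Hx Hy Hc Hn.
  apply (sign_interval f (Rmin x y) (Rmax x y)).
  - split; [apply Rmin_l|apply Rmax_l].
  - split; [apply Rmin_r|apply Rmax_r].
  - intros z Hz. apply Hc. unfold Rmin, Rmax in Hz. destruct (Rle_dec x y); lra.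
  - intros z Hz. apply Hn. unfold Rmin, Rmax in Hz. destruct (Rle_dec x y); lra.
Qed.

Lemma incr_of_deriv f f' a b :
  (forall x, a < x < b -> derivable_pt_lim f x (f' x)) ->
  (forall x, a < x < b -> f' x > 0) ->
  forall x y, a < x -> x < y -> y < b -> f x < f y.
Proof.
  intros Hd Hp x y H1 H2 H3.
  destruct (MVT_cor2 f f' x y H2) as [c [Hc1 Hc2]].
  - intros c Hc; apply Hd; lra.
  - assert (f' c > 0) by (apply Hp; lra). nra.
Qed.

Lemma decr_of_deriv f f' a b :
  (forall x, a < x < b -> derivable_pt_lim f x (f' x)) ->
  (forall x, a < x < b -> f' x < 0) ->
  forall x y, a < x -> x < y -> y < b -> f y < f x.
Proof.
  intros Hd Hp x y H1 H2 H3.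
  destruct (MVT_cor2 f f' x y H2) as [c [Hc1 Hc2]].
  - intros c Hc; apply Hd; lra.
  - assert (f' c < 0) by (apply Hp; lra). nra.
Qed.

Definition smono (a b : R) (f : R -> R) : Prop :=
  (forall x y, a < x -> x < y -> y < b -> f x < f y) \/
  (forall x y, a < x -> x < y -> y < b -> f y < f x).

Lemma smono_of_deriv f f' a b :
  (forall x, a < x < b -> derivable_pt_lim f x (f' x)) ->
  (forall x, a < x < b -> continuity_pt f' x) ->
  (forall x, a < x < b -> f' x <> 0) -> smono a b f.
Proof.
  intros Hd Hc Hn.
  destruct (Rle_or_lt b a) as [Hba|Hab].
  { left. intros; lra. }
  set (m := (a + b) / 2).
  assert (Hm : a < m < b) by (unfold m; lra).
  destruct (Rlt_or_le 0 (f' m)) as [P|P].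
  - left. apply (incr_of_deriv f f' a b Hd). intros x Hx.
    pose proof (sign_open f' a b x m Hx Hm Hc Hn). nra.
  - right. apply (decr_of_deriv f f' a b Hd). intros x Hx.
    pose proof (sign_open f' a b x m Hx Hm Hc Hn).
    assert (f' m <> 0) by (apply Hn; auto). nra.
Qed.

Lemma smono_left_limit f a b L : smono a b f ->
  (forall eps, 0 < eps -> exists del, 0 < del /\ forall s, b - del < s < b -> Rabs (f s - L) < eps) ->
  forall x, a < x < b -> f x <> L.
Proof.
  intros [Hi|Hd] Hl x Hx E.
  - set (y := (x + b) / 2). assert (Hy : f x < f y) by (apply Hi; unfold y; lra).
    destruct (Hl (f y - L)) as [d [Hd1 Hd2]]; [lra|].
    set (s := Rmax y (b - d / 2) + (b - Rmax y (b - d/2)) / 2).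
    assert (Hs1 : Rmax y (b - d/2) < b) by (apply Rmax_lub_lt; unfold y; lra).
    assert (Hs2 : y <= Rmax y (b - d/2)) by apply Rmax_l.
    assert (Hs3 : b - d/2 <= Rmax y (b - d/2)) by apply Rmax_r.
    assert (Hfy : f y <= f s).
    { destruct (Req_dec y s) as [Q|Q]; [rewrite Q; lra|]. left. apply Hi; unfold s, y in *; lra. }
    specialize (Hd2 s). assert (b - d < s < b) by (unfold s; lra).
    specialize (Hd2 H). apply Rabs_def2 in Hd2. lra.
  - set (y := (x + b) / 2). assert (Hy : f y < f x) by (apply Hd; unfold y; lra).
    destruct (Hl (L - f y)) as [d [Hd1 Hd2]]; [lra|].
    set (s := Rmax y (b - d / 2) + (b - Rmax y (b - d/2)) / 2).
    assert (Hs1 : Rmax y (b - d/2) < b) by (apply Rmax_lub_lt; unfold y; lra).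
    assert (Hs2 : y <= Rmax y (b - d/2)) by apply Rmax_l.
    assert (Hs3 : b - d/2 <= Rmax y (b - d/2)) by apply Rmax_r.
    assert (Hfy : f s <= f y).
    { destruct (Req_dec y s) as [Q|Q]; [rewrite Q; lra|]. left. apply Hd; unfold s, y in *; lra. }
    specialize (Hd2 s). assert (b - d < s < b) by (unfold s; lra).
    specialize (Hd2 H). apply Rabs_def2 in Hd2. lra.
Qed.

Lemma smono_right_limit f a b L : smono a b f ->
  (forall eps, 0 < eps -> exists del, 0 < del /\ forall s, a < s < a + del -> Rabs (f s - L) < eps) ->
  forall x, a < x < b -> f x <> L.
Proof.
  intros Hm Hl x Hx E.
  apply (smono_left_limit (fun s => f (- s)) (- b) (- a) L) with (x := - x).
  - destruct Hm as [Hi|Hd]; [right|left]; intros u v Hu Huv Hv; [apply Hi|apply Hd]; lra.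
  - intros eps He. destruct (Hl eps He) as [d [Hd1 Hd2]]. exists d. split; auto.
    intros s Hs. apply Hd2. lra.
  - lra.
  - rewrite Ropp_involutive. exact E.
Qed.

Lemma local_sign2 g h u K d0 : 0 < d0 ->
  (forall x, Rabs (x - u) < d0 -> derivable_pt_lim g x (h x)) ->
  g u = 0 -> h u = 0 -> derivable_pt_lim h u K -> K <> 0 ->
  exists d, 0 < d /\ forall x, 0 < Rabs (x - u) < d -> g x * K > 0.
Proof.
  intros Hd0 Hg Gu Hu HK K0.
  destruct (HK (Rabs K)) as [dl Hdl]; [apply Rabs_pos_lt; auto|].
  assert (Hloc : forall hh, hh <> 0 -> Rabs hh < dl -> h (u + hh) * hh * K > 0).
  { intros hh H1 H2. specialize (Hdl hh H1 H2). rewrite Hu, Rminus_0_r in Hdl.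
    assert (Hq : h (u + hh) = (h (u + hh) / hh) * hh) by (field; auto).
    rewrite Hq. set (q := h (u + hh) / hh) in *.
    destruct (Rle_or_lt 0 K) as [Kp|Kn].
    - assert (K > 0) by (destruct Kp; [lra|congruence]).
      rewrite (Rabs_right K) in Hdl by lra. apply Rabs_def2 in Hdl.
      assert (q > 0) by lra. assert (hh * hh > 0) by (apply Rsqr_pos_lt in H1; unfold Rsqr in H1; lra).
      assert (K > 0) by lra. replace (q * hh * hh * K) with (q * K * (hh * hh)) by ring.
      apply Rmult_gt_0_compat; [apply Rmult_gt_0_compat|]; lra.
    - rewrite (Rabs_left K) in Hdl by lra. apply Rabs_def2 in Hdl.
      assert (q < 0) by lra. assert (hh * hh > 0) by (apply Rsqr_pos_lt in H1; unfold Rsqr in H1; lra).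
      replace (q * hh * hh * K) with ((- q) * (- K) * (hh * hh)) by ring.
      apply Rmult_gt_0_compat; [apply Rmult_gt_0_compat|]; lra. }
  exists (Rmin dl d0). split. { apply Rmin_pos; [apply cond_pos|lra]. }
  intros x [Hx1 Hx2].
  assert (Hm1 := Rmin_l dl d0). assert (Hm2 := Rmin_r dl d0).
  destruct (Rlt_or_le u x) as [Ux|Xu].
  - rewrite Rabs_right in Hx2 by lra.
    destruct (MVT_cor2 g h u x Ux) as [c [Hc1 Hc2]].
    { intros c Hc. apply Hg. rewrite Rabs_right; lra. }
    assert (Hc : h (u + (c - u)) * (c - u) * K > 0).
    { apply Hloc; [lra|]. rewrite Rabs_right; lra. }
    replace (u + (c - u)) with c in Hc by ring.
    rewrite Gu, Rminus_0_r in Hc1. rewrite Hc1.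
    assert (h c * K > 0).
    { assert (c - u > 0) by lra. destruct (Rle_or_lt (h c * K) 0); [|lra].
      exfalso. assert (h c * K * (c - u) <= 0) by nra.
      lra. }
    replace (h c * (x - u) * K) with ((h c * K) * (x - u)) by ring.
    apply Rmult_gt_0_compat; lra.
  - assert (Xu' : x < u).
    { destruct Xu; auto. subst. rewrite Rminus_diag, Rabs_R0 in Hx1. lra. }
    rewrite Rabs_left in Hx2 by lra.
    destruct (MVT_cor2 g h x u Xu') as [c [Hc1 Hc2]].
    { intros c Hc. apply Hg. destruct (Req_dec c u); [subst; rewrite Rminus_diag, Rabs_R0; lra|].
      rewrite Rabs_left; lra. }
    assert (Hc : h (u + (c - u)) * (c - u) * K > 0).
    { apply Hloc; [lra|]. rewrite Rabs_left; lra. }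
    replace (u + (c - u)) with c in Hc by ring.
    rewrite Gu in Hc1.
    assert (h c * K < 0).
    { assert (c - u < 0) by lra. destruct (Rle_or_lt 0 (h c * K)); [|lra].
      exfalso. assert (h c * K * (c - u) <= 0).
      { replace (h c * K * (c - u)) with (- (h c * K * (u - c))) by ring.
        assert (0 <= h c * K * (u - c)) by (apply Rmult_le_pos; lra). lra. }
      lra. }
    assert (g x = - (h c * (u - x))) by lra. rewrite H0.
    replace (- (h c * (u - x)) * K) with ((- (h c * K)) * (u - x)) by ring.
    apply Rmult_gt_0_compat; lra.
Qed.

Lemma limit_sign f a y L M : a < y ->
  (forall eps, 0 < eps -> exists del, 0 < del /\ forall s, a < s < a + del -> Rabs (f s - L) < eps) ->
  L <> 0 -> (forall s, a < s < y -> f s * M > 0) -> L * M > 0.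
Proof.
  intros Hay Hl L0 Hs.
  destruct (Hl (Rabs L)) as [d [Hd Hd2]]; [apply Rabs_pos_lt; auto|].
  set (s := a + Rmin d (y - a) / 2).
  assert (Hm1 := Rmin_l d (y - a)). assert (Hm2 := Rmin_r d (y - a)).
  assert (Hmp : 0 < Rmin d (y - a)) by (apply Rmin_pos; lra).
  specialize (Hd2 s). specialize (Hs s).
  assert (a < s < a + d) by (unfold s; lra). assert (a < s < y) by (unfold s; lra).
  specialize (Hd2 H). specialize (Hs H0).
  assert (f s * L > 0).
  { destruct (Rle_or_lt 0 L).
    - rewrite (Rabs_right L) in Hd2 by lra. apply Rabs_def2 in Hd2. nra.
    - rewrite (Rabs_left L) in Hd2 by lra. apply Rabs_def2 in Hd2. nra. }
  assert (f s * f s * (L * M) > 0) by nra.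
  destruct (Rle_or_lt (L * M) 0); [|lra].
  assert (f s * f s >= 0) by nra. nra.
Qed.

Lemma incr_left_lt f a b L :
  (forall x y, a < x -> x < y -> y < b -> f x < f y) ->
  (forall eps, 0 < eps -> exists del, 0 < del /\ forall s, b - del < s < b -> Rabs (f s - L) < eps) ->
  forall x, a < x < b -> f x < L.
Proof.
  intros Hi Hl x Hx. destruct (Rlt_or_le (f x) L) as [Q|Q]; auto. exfalso.
  set (y := (x + b) / 2). assert (Hy : f x < f y) by (apply Hi; unfold y; lra).
  destruct (Hl (f y - L)) as [d [Hd1 Hd2]]; [lra|].
  set (s := Rmax y (b - d / 2) + (b - Rmax y (b - d/2)) / 2).
  assert (Hs1 : Rmax y (b - d/2) < b) by (apply Rmax_lub_lt; unfold y; lra).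
  assert (Hs2 : y <= Rmax y (b - d/2)) by apply Rmax_l.
  assert (Hs3 : b - d/2 <= Rmax y (b - d/2)) by apply Rmax_r.
  assert (Hfy : f y <= f s).
  { destruct (Req_dec y s) as [E|E]; [rewrite E; lra|]. left. apply Hi; unfold s, y in *; lra. }
  specialize (Hd2 s). assert (b - d < s < b) by (unfold s; lra).
  specialize (Hd2 H). apply Rabs_def2 in Hd2. lra.
Qed.

Lemma decr_left_gt f a b L :
  (forall x y, a < x -> x < y -> y < b -> f y < f x) ->
  (forall eps, 0 < eps -> exists del, 0 < del /\ forall s, b - del < s < b -> Rabs (f s - L) < eps) ->
  forall x, a < x < b -> L < f x.
Proof.
  intros Hd Hl x Hx.
  assert (- f x < - L); [|lra].
  apply (incr_left_lt (fun s => - f s) a b (- L)); auto.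
  - intros u v H1 H2 H3. specialize (Hd u v H1 H2 H3). lra.
  - intros eps He. destruct (Hl eps He) as [d [Hd1 Hd2]]. exists d; split; auto.
    intros s Hs. replace (- f s - - L) with (- (f s - L)) by ring. rewrite Rabs_Ropp. auto.
Qed.

Lemma incr_right_gt f a b L :
  (forall x y, a < x -> x < y -> y < b -> f x < f y) ->
  (forall eps, 0 < eps -> exists del, 0 < del /\ forall s, a < s < a + del -> Rabs (f s - L) < eps) ->
  forall x, a < x < b -> L < f x.
Proof.
  intros Hi Hl x Hx.
  replace x with (- - x) by ring.
  apply (decr_left_gt (fun s => f (- s)) (- b) (- a) L).
  - intros u v H1 H2 H3. apply Hi; lra.
  - intros eps He. destruct (Hl eps He) as [d [Hd1 Hd2]]. exists d; split; auto.
    intros s Hs. apply Hd2. lra.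
  - lra.
Qed.

Lemma decr_right_lt f a b L :
  (forall x y, a < x -> x < y -> y < b -> f y < f x) ->
  (forall eps, 0 < eps -> exists del, 0 < del /\ forall s, a < s < a + del -> Rabs (f s - L) < eps) ->
  forall x, a < x < b -> f x < L.
Proof.
  intros Hi Hl x Hx.
  replace x with (- - x) by ring.
  apply (incr_left_lt (fun s => f (- s)) (- b) (- a) L).
  - intros u v H1 H2 H3. apply Hi; lra.
  - intros eps He. destruct (Hl eps He) as [d [Hd1 Hd2]]. exists d; split; auto.
    intros s Hs. apply Hd2. lra.
  - lra.
Qed.

Lemma chain2 x y z : x * y > 0 -> y * z > 0 -> x * z > 0.
Proof.
  intros H1 H2. assert (H3 : (x * y) * (y * z) > 0) by (apply Rmult_gt_0_compat; auto).
  assert (Hy : y <> 0) by (intro E; subst; lra).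
  assert (Hyy : y * y > 0) by (apply Rsqr_pos_lt in Hy; unfold Rsqr in Hy; lra).
  destruct (Rle_or_lt (x * z) 0) as [Q|Q]; auto.
  exfalso. assert ((x * z) * (y * y) <= 0).
  { assert (0 <= - (x * z)) by lra. assert (0 <= - (x * z) * (y * y)) by (apply Rmult_le_pos; lra). lra. }
  replace ((x * y) * (y * z)) with ((x * z) * (y * y)) in H3 by ring. lra.
Qed.

Lemma scale_pos_l k x y : 0 < k -> (k * x) * y > 0 -> x * y > 0.
Proof. intros Hk H. replace ((k * x) * y) with (k * (x * y)) in H by ring.
  destruct (Rle_or_lt (x * y) 0); auto. assert (k * (x * y) <= 0).
  { assert (0 <= k * - (x * y)) by (apply Rmult_le_pos; lra). lra. } lra. Qed.
Lemma scale_pos_r k x y : 0 < k -> x * (k * y) > 0 -> x * y > 0.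
Proof. intros Hk H. rewrite Rmult_comm. apply (scale_pos_l k y x); auto. rewrite Rmult_comm; auto. Qed.


Definition vcont (f : R -> V3) (x : R) : Prop :=
  continuity_pt (fun t => vx (f t)) x /\ continuity_pt (fun t => vy (f t)) x /\
  continuity_pt (fun t => vz (f t)) x.

Definition vder (f : R -> V3) (x : R) (d : V3) : Prop :=
  derivable_pt_lim (fun t => vx (f t)) x (vx d) /\
  derivable_pt_lim (fun t => vy (f t)) x (vy d) /\
  derivable_pt_lim (fun t => vz (f t)) x (vz d).

Lemma dcont f x l : derivable_pt_lim f x l -> continuity_pt f x.
Proof. intros H. apply derivable_continuous_pt. exists l. exact H. Qed.

Lemma vder_cont f x d : vder f x d -> vcont f x.
Proof. intros [A [B C]]; repeat split; eapply dcont; eauto. Qed.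

Lemma cplus f g x : continuity_pt f x -> continuity_pt g x -> continuity_pt (fun t => f t + g t) x.
Proof. intros; apply (continuity_pt_plus f g); auto. Qed.
Lemma cminus f g x : continuity_pt f x -> continuity_pt g x -> continuity_pt (fun t => f t - g t) x.
Proof. intros; apply (continuity_pt_minus f g); auto. Qed.
Lemma cmult f g x : continuity_pt f x -> continuity_pt g x -> continuity_pt (fun t => f t * g t) x.
Proof. intros; apply (continuity_pt_mult f g); auto. Qed.
Lemma cconst c x : continuity_pt (fun _ => c) x.
Proof. apply (continuity_pt_const (fun _ => c)). intros a b; reflexivity. Qed.
Lemma cinv f x : continuity_pt f x -> f x <> 0 -> continuity_pt (fun t => / f t) x.
Proof. intros; apply (continuity_pt_inv f); auto. Qed.
Lemma csqrt f x : continuity_pt f x -> 0 <= f x -> continuity_pt (fun t => sqrt (f t)) x.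
Proof. intros. apply (continuity_pt_comp f sqrt); auto. apply continuity_pt_sqrt; auto. Qed.

Lemma cdot f g x : vcont f x -> vcont g x -> continuity_pt (fun t => dot (f t) (g t)) x.
Proof.
  intros [A1 [A2 A3]] [B1 [B2 B3]]. unfold dot.
  repeat apply cplus; apply cmult; auto.
Qed.

Lemma vcont_cross f g x : vcont f x -> vcont g x -> vcont (fun t => cross (f t) (g t)) x.
Proof.
  intros [A1 [A2 A3]] [B1 [B2 B3]]. unfold cross; simpl.
  repeat split; apply cminus; apply cmult; auto.
Qed.
Lemma vcont_sub f g x : vcont f x -> vcont g x -> vcont (fun t => vsub (f t) (g t)) x.
Proof. intros [A1 [A2 A3]] [B1 [B2 B3]]. unfold vsub; simpl. repeat split; apply cminus; auto. Qed.
Lemma vcont_add f g x : vcont f x -> vcont g x -> vcont (fun t => vadd (f t) (g t)) x.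
Proof. intros [A1 [A2 A3]] [B1 [B2 B3]]. unfold vadd; simpl. repeat split; apply cplus; auto. Qed.
Lemma vcont_const c x : vcont (fun _ => c) x.
Proof. repeat split; apply cconst. Qed.
Lemma vcont_scale k f x : continuity_pt k x -> vcont f x -> vcont (fun t => vscale (k t) (f t)) x.
Proof. intros K [A1 [A2 A3]]. unfold vscale; simpl. repeat split; apply cmult; auto. Qed.

Lemma dot_self_nonneg u : 0 <= dot u u.
Proof. destruct u; unfold dot; simpl; nra. Qed.

Lemma dot_self_pos u : u <> v0 -> 0 < dot u u.
Proof.
  destruct u as [a b c]; unfold dot, v0; simpl; intros H.
  destruct (Req_dec a 0); destruct (Req_dec b 0); destruct (Req_dec c 0);
    try (subst; exfalso; apply H; reflexivity);
  repeat match goal with H : ?x <> 0 |- _ => assert (0 < x * x) by (apply Rsqr_pos_lt in H; unfold Rsqr in H; lra); clear H end;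
  nra.
Qed.

Lemma vnorm_pos u : u <> v0 -> 0 < vnorm u.
Proof. intros H. unfold vnorm. apply sqrt_lt_R0. apply dot_self_pos; auto. Qed.

Lemma vnorm_nonneg u : 0 <= vnorm u.
Proof. apply sqrt_pos. Qed.

Lemma vnorm_sq u : vnorm u * vnorm u = dot u u.
Proof. unfold vnorm. apply sqrt_sqrt. apply dot_self_nonneg. Qed.

Lemma cnorm f x : vcont f x -> continuity_pt (fun t => vnorm (f t)) x.
Proof. intros H. unfold vnorm. apply csqrt; [apply cdot; auto | apply dot_self_nonneg]. Qed.

Lemma vcont_normalize f x : vcont f x -> f x <> v0 ->
  vcont (fun t => vscale (/ vnorm (f t)) (f t)) x.
Proof.
  intros H N. apply vcont_scale; auto. apply cinv; [apply cnorm; auto|].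
  apply Rgt_not_eq, vnorm_pos; auto.
Qed.

Lemma vnorm_scale k u : vnorm (vscale k u) = Rabs k * vnorm u.
Proof.
  unfold vnorm. replace (dot (vscale k u) (vscale k u)) with ((k * k) * dot u u)
    by (destruct u; unfold dot, vscale; simpl; ring).
  rewrite sqrt_mult_alt by nra. f_equal.
  change (k * k) with (Rsqr k). apply sqrt_Rsqr_abs.
Qed.

Lemma comp_le_vnorm u : Rabs (vx u) <= vnorm u /\ Rabs (vy u) <= vnorm u /\ Rabs (vz u) <= vnorm u.
Proof.
  destruct u as [a b c]; unfold vnorm, dot; simpl.
  repeat split; rewrite <- sqrt_Rsqr_abs; apply sqrt_le_1_alt; unfold Rsqr; nra.
Qed.

Lemma vnorm_le_sum u : vnorm u <= Rabs (vx u) + Rabs (vy u) + Rabs (vz u).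
Proof.
  destruct u as [a b c]; unfold vnorm, dot; simpl.
  rewrite <- (sqrt_Rsqr (Rabs a + Rabs b + Rabs c)) by (pose proof (Rabs_pos a); pose proof (Rabs_pos b); pose proof (Rabs_pos c); lra).
  apply sqrt_le_1_alt. unfold Rsqr.
  pose proof (Rabs_pos a); pose proof (Rabs_pos b); pose proof (Rabs_pos c).
  assert (Rabs a * Rabs a = a*a) by (rewrite <- Rabs_mult; apply Rabs_right; nra).
  assert (Rabs b * Rabs b = b*b) by (rewrite <- Rabs_mult; apply Rabs_right; nra).
  assert (Rabs c * Rabs c = c*c) by (rewrite <- Rabs_mult; apply Rabs_right; nra).
  nra.
Qed.

Lemma cauchy_schwarz u w : Rabs (dot u w) <= vnorm u * vnorm w.
Proof.
  assert (H : Rsqr (dot u w) <= Rsqr (vnorm u * vnorm w)).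
  { unfold Rsqr. replace (vnorm u * vnorm w * (vnorm u * vnorm w)) with
      ((vnorm u * vnorm u) * (vnorm w * vnorm w)) by ring.
    rewrite !vnorm_sq. destruct u as [a b c]; destruct w as [d e f]; unfold dot; simpl.
    assert (0 <= (a*e-b*d)*(a*e-b*d) + (a*f-c*d)*(a*f-c*d) + (b*f-c*e)*(b*f-c*e)) by (apply Rplus_le_le_0_compat; [apply Rplus_le_le_0_compat|]; apply Rle_0_sqr).
    nra. }
  apply Rsqr_le_abs_0 in H. rewrite (Rabs_right (vnorm u * vnorm w)) in H; auto.
  apply Rle_ge, Rmult_le_pos; apply vnorm_nonneg.
Qed.

Lemma cont_close f x eps : continuity_pt f x -> 0 < eps ->
  exists d, 0 < d /\ forall t, Rabs (t - x) < d -> Rabs (f t - f x) < eps.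
Proof.
  intros H He. destruct (H eps He) as [d [Hd Hd2]]. exists d. split; auto.
  intros t Ht. destruct (Req_dec t x) as [E|E].
  - subst. rewrite Rminus_diag, Rabs_R0. auto.
  - apply (Hd2 t). split; [split; [exact I| auto] | exact Ht].
Qed.

Lemma vcont_close f x eps : vcont f x -> 0 < eps ->
  exists d, 0 < d /\ forall t, Rabs (t - x) < d -> vnorm (vsub (f t) (f x)) < eps.
Proof.
  intros [A [B C]] He.
  destruct (cont_close _ _ (eps/3) A) as [d1 [H1 K1]]; [lra|].
  destruct (cont_close _ _ (eps/3) B) as [d2 [H2 K2]]; [lra|].
  destruct (cont_close _ _ (eps/3) C) as [d3 [H3 K3]]; [lra|].
  exists (Rmin d1 (Rmin d2 d3)). split. { repeat apply Rmin_pos; auto. }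
  intros t Ht. pose proof (Rmin_l d1 (Rmin d2 d3)). pose proof (Rmin_r d1 (Rmin d2 d3)).
  pose proof (Rmin_l d2 d3). pose proof (Rmin_r d2 d3).
  eapply Rle_lt_trans; [apply vnorm_le_sum|]. simpl.
  assert (Rabs (vx (f t) - vx (f x)) < eps/3) by (apply K1; lra).
  assert (Rabs (vy (f t) - vy (f x)) < eps/3) by (apply K2; lra).
  assert (Rabs (vz (f t) - vz (f x)) < eps/3) by (apply K3; lra).
  lra.
Qed.

Lemma vcont_rlim f x : vcont f x -> rlim f x (f x).
Proof.
  intros H eps He. destruct (vcont_close f x eps H He) as [d [Hd K]].
  exists d. split; auto. intros t Ht. apply K. rewrite Rabs_right; lra.
Qed.

Lemma vcont_llim f x : vcont f x -> llim f x (f x).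
Proof.
  intros H eps He. destruct (vcont_close f x eps H He) as [d [Hd K]].
  exists d. split; auto. intros t Ht. apply K. rewrite Rabs_left; lra.
Qed.

Lemma vnorm_sub_sym a b : vnorm (vsub a b) = vnorm (vsub b a).
Proof. unfold vnorm; f_equal; destruct a, b; unfold dot, vsub; simpl; ring. Qed.

Lemma V3_ext a b : vx a = vx b -> vy a = vy b -> vz a = vz b -> a = b.
Proof. destruct a, b; simpl; intros; subst; reflexivity. Qed.

Lemma close_eq (x y : R) : (forall eps, 0 < eps -> Rabs (x - y) < eps) -> x = y.
Proof.
  intros H. destruct (Req_dec x y) as [E|E]; auto. exfalso.
  assert (0 < Rabs (x - y)) by (apply Rabs_pos_lt; lra).
  specialize (H _ H0). lra.
Qed.

Lemma llim_unique f s a b : llim f s a -> llim f s b -> a = b.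
Proof.
  intros Ha Hb.
  assert (K : forall eps, 0 < eps ->
     Rabs (vx a - vx b) < eps /\ Rabs (vy a - vy b) < eps /\ Rabs (vz a - vz b) < eps).
  { intros eps He. destruct (Ha (eps/2)) as [d1 [H1 K1]]; [lra|].
    destruct (Hb (eps/2)) as [d2 [H2 K2]]; [lra|].
    set (t := s - Rmin d1 d2 / 2).
    pose proof (Rmin_l d1 d2). pose proof (Rmin_r d1 d2). assert (0 < Rmin d1 d2) by (apply Rmin_pos; auto).
    specialize (K1 t). specialize (K2 t).
    assert (A1 : vnorm (vsub (f t) a) < eps/2) by (apply K1; unfold t; lra).
    assert (A2 : vnorm (vsub (f t) b) < eps/2) by (apply K2; unfold t; lra).
    pose proof (comp_le_vnorm (vsub (f t) a)) as [X1 [Y1 Z1]].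
    pose proof (comp_le_vnorm (vsub (f t) b)) as [X2 [Y2 Z2]].
    simpl in X1, Y1, Z1, X2, Y2, Z2.
    assert (T : forall p q u e, Rabs (u - p) < e/2 -> Rabs (u - q) < e/2 -> Rabs (p - q) < e).
    { intros p q u e P Q. replace (p - q) with ((u - q) - (u - p)) by ring.
      eapply Rle_lt_trans; [apply Rabs_triang|]. rewrite Rabs_Ropp. lra. }
    repeat split; eapply T; eapply Rle_lt_trans; eauto. }
  apply V3_ext; apply close_eq; intros eps He; apply K; auto.
Qed.

Lemma rlim_unique f s a b : rlim f s a -> rlim f s b -> a = b.
Proof.
  intros Ha Hb.
  apply (llim_unique (fun t => f (- t)) (- s)).
  - intros eps He. destruct (Ha eps He) as [d [Hd K]]. exists d; split; auto.
    intros t Ht. apply K. lra.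
  - intros eps He. destruct (Hb eps He) as [d [Hd K]]. exists d; split; auto.
    intros t Ht. apply K. lra.
Qed.

Lemma dplus f g x a b : derivable_pt_lim f x a -> derivable_pt_lim g x b ->
  derivable_pt_lim (fun t => f t + g t) x (a + b).
Proof. intros; apply (derivable_pt_lim_plus f g); auto. Qed.
Lemma dminus f g x a b : derivable_pt_lim f x a -> derivable_pt_lim g x b ->
  derivable_pt_lim (fun t => f t - g t) x (a - b).
Proof. intros; apply (derivable_pt_lim_minus f g); auto. Qed.
Lemma dmult f g x a b : derivable_pt_lim f x a -> derivable_pt_lim g x b ->
  derivable_pt_lim (fun t => f t * g t) x (a * g x + f x * b).
Proof. intros; apply (derivable_pt_lim_mult f g); auto. Qed.
Lemma dconst c x : derivable_pt_lim (fun _ => c) x 0.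
Proof. apply (derivable_pt_lim_const c). Qed.

Lemma deq f x a b : derivable_pt_lim f x a -> a = b -> derivable_pt_lim f x b.
Proof. intros H E; subst; auto. Qed.

Lemma vder_dot f g x f' g' : vder f x f' -> vder g x g' ->
  derivable_pt_lim (fun t => dot (f t) (g t)) x (dot f' (g x) + dot (f x) g').
Proof.
  intros [A1 [A2 A3]] [B1 [B2 B3]]. unfold dot.
  eapply deq. { repeat apply dplus; apply dmult; eauto. }
  simpl. ring.
Qed.

Lemma vder_cross f g x f' g' : vder f x f' -> vder g x g' ->
  vder (fun t => cross (f t) (g t)) x (vadd (cross f' (g x)) (cross (f x) g')).
Proof.
  intros [A1 [A2 A3]] [B1 [B2 B3]]. unfold cross, vadd; simpl.
  repeat split; (eapply deq; [apply dminus; apply dmult; eauto|simpl; ring]).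
Qed.

Lemma vder_const c x : vder (fun _ => c) x v0.
Proof. repeat split; apply dconst. Qed.

Lemma vder_sub f g x f' g' : vder f x f' -> vder g x g' ->
  vder (fun t => vsub (f t) (g t)) x (vsub f' g').
Proof. intros [A1 [A2 A3]] [B1 [B2 B3]]. unfold vsub; simpl. repeat split; apply dminus; auto. Qed.

Definition RL (f : R -> R) (a L : R) := limit1_in f (fun s => a < s) L a.
Definition LL (f : R -> R) (a L : R) := limit1_in f (fun s => s < a) L a.

Lemma RL_eps f a L : RL f a L ->
  forall eps, 0 < eps -> exists del, 0 < del /\ forall s, a < s < a + del -> Rabs (f s - L) < eps.
Proof.
  intros H eps He. destruct (H eps He) as [d [Hd K]]. exists d. split; [lra|].
  intros s Hs. apply (K s). split; [lra|]. simpl. unfold R_dist. rewrite Rabs_right; lra.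
Qed.

Lemma LL_eps f a L : LL f a L ->
  forall eps, 0 < eps -> exists del, 0 < del /\ forall s, a - del < s < a -> Rabs (f s - L) < eps.
Proof.
  intros H eps He. destruct (H eps He) as [d [Hd K]]. exists d. split; [lra|].
  intros s Hs. apply (K s). split; [lra|]. simpl. unfold R_dist. rewrite Rabs_left; lra.
Qed.

Lemma cont_RL f a : continuity_pt f a -> RL f a (f a).
Proof.
  intros H eps He. destruct (cont_close f a eps H He) as [d [Hd K]].
  exists d. split; [lra|]. intros s [Hs1 Hs2]. apply K. exact Hs2.
Qed.

Lemma cont_LL f a : continuity_pt f a -> LL f a (f a).
Proof.
  intros H eps He. destruct (cont_close f a eps H He) as [d [Hd K]].
  exists d. split; [lra|]. intros s [Hs1 Hs2]. apply K. exact Hs2.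
Qed.

Definition vRL (f : R -> V3) a (L : V3) :=
  RL (fun s => vx (f s)) a (vx L) /\ RL (fun s => vy (f s)) a (vy L) /\ RL (fun s => vz (f s)) a (vz L).
Definition vLL (f : R -> V3) a (L : V3) :=
  LL (fun s => vx (f s)) a (vx L) /\ LL (fun s => vy (f s)) a (vy L) /\ LL (fun s => vz (f s)) a (vz L).

Lemma rlim_vRL f a L : rlim f a L -> vRL f a L.
Proof.
  intros H. repeat split; intros eps He; destruct (H eps He) as [d [Hd K]];
  exists d; (split; [lra|]); intros s [Hs1 Hs2]; simpl in Hs2; unfold R_dist in Hs2;
  rewrite Rabs_right in Hs2 by lra; simpl; unfold R_dist;
  (eapply Rle_lt_trans; [|apply (K s); lra]);
  pose proof (comp_le_vnorm (vsub (f s) L)) as [X [Y Z]]; simpl in X, Y, Z; assumption.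
Qed.

Lemma llim_vLL f a L : llim f a L -> vLL f a L.
Proof.
  intros H. repeat split; intros eps He; destruct (H eps He) as [d [Hd K]];
  exists d; (split; [lra|]); intros s [Hs1 Hs2]; simpl in Hs2; unfold R_dist in Hs2;
  rewrite Rabs_left in Hs2 by lra; simpl; unfold R_dist;
  (eapply Rle_lt_trans; [|apply (K s); lra]);
  pose proof (comp_le_vnorm (vsub (f s) L)) as [X [Y Z]]; simpl in X, Y, Z; assumption.
Qed.

Lemma vcont_vRL f a : vcont f a -> vRL f a (f a).
Proof. intros [A [B C]]. repeat split; apply cont_RL; auto. Qed.
Lemma vcont_vLL f a : vcont f a -> vLL f a (f a).
Proof. intros [A [B C]]. repeat split; apply cont_LL; auto. Qed.

Lemma RL_dot f g a F G : vRL f a F -> vRL g a G -> RL (fun s => dot (f s) (g s)) a (dot F G).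
Proof.
  intros [A1 [A2 A3]] [B1 [B2 B3]]. unfold dot, RL in *.
  repeat apply limit_plus; apply limit_mul; auto.
Qed.
Lemma LL_dot f g a F G : vLL f a F -> vLL g a G -> LL (fun s => dot (f s) (g s)) a (dot F G).
Proof.
  intros [A1 [A2 A3]] [B1 [B2 B3]]. unfold dot, LL in *.
  repeat apply limit_plus; apply limit_mul; auto.
Qed.
Lemma RL_div f g a F G : RL f a F -> RL g a G -> G <> 0 -> RL (fun s => f s / g s) a (F / G).
Proof. intros. unfold RL, Rdiv in *. apply limit_mul; auto. apply limit_inv; auto. Qed.
Lemma LL_div f g a F G : LL f a F -> LL g a G -> G <> 0 -> LL (fun s => f s / g s) a (F / G).
Proof. intros. unfold LL, Rdiv in *. apply limit_mul; auto. apply limit_inv; auto. Qed.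


Lemma peval_cons a p x : peval (a :: p) x = a + x * peval p x.
Proof. reflexivity. Qed.

Lemma peval_padd p q x : peval (padd p q) x = peval p x + peval q x.
Proof.
  revert q; induction p as [|a p IH]; intros q; simpl; [lra|].
  destruct q as [|b q]; simpl; [lra|]. rewrite IH. ring.
Qed.

Lemma peval_pscale k p x : peval (pscale k p) x = k * peval p x.
Proof. induction p as [|a p IH]; simpl; [ring|]. rewrite IH. ring. Qed.

Lemma peval_pmul p q x : peval (pmul p q) x = peval p x * peval q x.
Proof.
  induction p as [|a p IH]; simpl; [ring|].
  rewrite peval_padd, peval_pscale. simpl. rewrite IH. ring.
Qed.

Lemma peval_psub p q x : peval (psub p q) x = peval p x - peval q x.
Proof. unfold psub. rewrite peval_padd, peval_pscale. ring. Qed.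

Lemma peval_pderiv_aux q k x :
  peval (pderiv_aux k q) x = INR k * peval q x + x * peval (pderiv q) x.
Proof.
  revert k; induction q as [|b q IH]; intros k; simpl; [ring|].
  change (peval (pderiv (b :: q)) x) with (peval (pderiv_aux 1 q) x).
  rewrite !IH, S_INR. simpl INR. ring.
Qed.

Lemma peval_deriv q x : derivable_pt_lim (fun y => peval q y) x (peval (pderiv q) x).
Proof.
  induction q as [|a q IH]; simpl.
  - apply derivable_pt_lim_const.
  - change (peval (pderiv (a :: q)) x) with (peval (pderiv_aux 1 q) x).
    rewrite peval_pderiv_aux. simpl INR.
    replace (1 * peval q x + x * peval (pderiv q) x) with
      (0 + (1 * peval q x + x * peval (pderiv q) x)) by ring.
    apply (derivable_pt_lim_plus (fun _ => a) (fun y => y * peval q y)).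
    + apply derivable_pt_lim_const.
    + apply (derivable_pt_lim_mult id (fun y => peval q y)); [apply derivable_pt_lim_id | exact IH].
Qed.

Lemma rf_deriv_ok f x : peval (snd f) x <> 0 ->
  derivable_pt_lim (rf_eval f) x (rf_eval (rf_deriv f) x).
Proof.
  intros H. unfold rf_eval, rf_deriv; simpl.
  rewrite peval_psub, !peval_pmul.
  pose proof (derivable_pt_lim_div _ _ x _ _ (peval_deriv (fst f) x) (peval_deriv (snd f) x) H) as D.
  unfold div_fct in D. unfold Rsqr in D.
  replace ((peval (pderiv (fst f)) x * peval (snd f) x - peval (fst f) x * peval (pderiv (snd f)) x) /
     (peval (snd f) x * peval (snd f) x)) with
   ((peval (pderiv (fst f)) x * peval (snd f) x - peval (pderiv (snd f)) x * peval (fst f) x) /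
     (peval (snd f) x * peval (snd f) x)) by (f_equal; ring).
  exact D.
Qed.

Lemma defined_rD (r : curve) t : defined_at r t -> defined_at (rD r) t.
Proof.
  unfold defined_at, rD, cmap, rf_deriv; simpl. rewrite !peval_pmul.
  intros [A [B C]]; repeat split; apply Rmult_integral_contrapositive; tauto.
Qed.

Lemma pos_der (r : curve) t : defined_at r t -> vder (pos r) t (pos (rD r) t).
Proof.
  intros [A [B C]]. unfold vder, pos, rD, cmap; simpl.
  repeat split; apply rf_deriv_ok; assumption.
Qed.

Definition nrm (u : V3) := vscale (/ vnorm u) u.

Record Setup (p v w z : R -> V3) (t0 t1 : R) : Prop := {
  s_lt : t0 < t1;
  s_dp : forall t, t0 <= t <= t1 -> vder p t (v t);
  s_dv : forall t, t0 <= t <= t1 -> vder v t (w t);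
  s_dw : forall t, t0 <= t <= t1 -> vder w t (z t);
  s_cz : forall t, t0 <= t <= t1 -> vcont z t;
  s_v : forall t, t0 < t <= t1 -> v t <> v0;
  s_c : forall t, t0 < t <= t1 -> cross (v t) (w t) <> v0;
  s_D : forall t, t0 < t <= t1 -> det3 (v t) (w t) (z t) <> 0 }.

Record Adm (p A G : R -> V3) (t0 t1 : R) : Prop := {
  a_I1 : forall s1 s2 a g, t0 <= s1 < s2 -> s2 <= t1 ->
     rlim A s1 a -> llim G s2 g -> dot a g <> 0;
  a_I2 : forall s1 s2 a g, t0 <= s1 < s2 -> s2 <= t1 ->
     llim A s2 a -> rlim G s1 g -> dot a g <> 0;
  a_II : forall s1 s2 a1 a2, t0 <= s1 < s2 -> s2 <= t1 ->
     rlim A s1 a1 -> llim A s2 a2 ->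
     dot (cross a1 (vsub (p s2) (p s1))) a2 <> 0;
  a_III1 : forall s1 s2 g, t0 <= s1 < s2 -> s2 <= t1 ->
     llim G s2 g -> dot (vsub (p s1) (p s2)) g <> 0;
  a_III2 : forall s1 s2 g, t0 <= s1 < s2 -> s2 <= t1 ->
     rlim G s1 g -> dot (vsub (p s2) (p s1)) g <> 0 }.

Lemma dot_nrm_r x u : dot x (nrm u) = / vnorm u * dot x u.
Proof. unfold nrm, dot, vscale; simpl; ring. Qed.
Lemma dot_nrm_l u x : dot (nrm u) x = / vnorm u * dot u x.
Proof. unfold nrm, dot, vscale; simpl; ring. Qed.
Lemma inv_norm_pos u : u <> v0 -> 0 < / vnorm u.
Proof. intros H. apply Rinv_0_lt_compat, vnorm_pos; auto. Qed.
Lemma nz_scale k x : 0 < k -> k * x <> 0 -> x <> 0.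
Proof. intros H1 H2 E. apply H2. rewrite E. ring. Qed.
Lemma nz_scale' k x : 0 < k -> x <> 0 -> k * x <> 0.
Proof. intros H1 H2. apply Rmult_integral_contrapositive; split; lra. Qed.

Definition cc (v w : R -> V3) t := cross (v t) (w t).
Definition AA (v : R -> V3) t := nrm (v t).
Definition GG (v w : R -> V3) t := nrm (cc v w t).

Section Basic.
Context (p v w z : R -> V3) (t0 t1 : R) (S : Setup p v w z t0 t1).

Lemma cont_p t : t0 <= t <= t1 -> vcont p t.
Proof. intros; eapply vder_cont, s_dp; eauto. Qed.
Lemma cont_v t : t0 <= t <= t1 -> vcont v t.
Proof. intros; eapply vder_cont, s_dv; eauto. Qed.
Lemma cont_w t : t0 <= t <= t1 -> vcont w t.
Proof. intros; eapply vder_cont, s_dw; eauto. Qed.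
Lemma cont_c t : t0 <= t <= t1 -> vcont (cc v w) t.
Proof. intros; unfold cc; apply vcont_cross; [apply cont_v|apply cont_w]; auto. Qed.
Lemma cont_A t : t0 < t <= t1 -> vcont (AA v) t.
Proof. intros; unfold AA, nrm. apply (vcont_normalize v); [apply cont_v; lra| apply (s_v _ _ _ _ _ _ S); auto]. Qed.
Lemma cont_G t : t0 < t <= t1 -> vcont (GG v w) t.
Proof. intros; unfold GG, nrm. apply (vcont_normalize (cc v w)); [apply cont_c; lra| apply (s_c _ _ _ _ _ _ S); auto]. Qed.
Lemma ipv t : t0 < t <= t1 -> 0 < / vnorm (v t).
Proof. intros; apply inv_norm_pos, (s_v _ _ _ _ _ _ S); auto. Qed.
Lemma ipc t : t0 < t <= t1 -> 0 < / vnorm (cc v w t).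
Proof. intros; apply inv_norm_pos, (s_c _ _ _ _ _ _ S); auto. Qed.
End Basic.

Section Facts.
Context (p v w z : R -> V3) (t0 t1 : R) (S : Setup p v w z t0 t1)
  (H : Adm p (AA v) (GG v w) t0 t1) (a0 g0 a1 g1 : V3)
  (Ha0 : rlim (AA v) t0 a0) (Hg0 : rlim (GG v w) t0 g0)
  (Ha1 : llim (AA v) t1 a1) (Hg1 : llim (GG v w) t1 g1).

Let lt01 := s_lt _ _ _ _ _ _ S.

Lemma rA t : t0 < t < t1 -> rlim (AA v) t (AA v t).
Proof. intros; apply vcont_rlim, (cont_A p v w z t0 t1 S); lra. Qed.
Lemma lA t : t0 < t <= t1 -> llim (AA v) t (AA v t).
Proof. intros; apply vcont_llim, (cont_A p v w z t0 t1 S); lra. Qed.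
Lemma rG t : t0 < t < t1 -> rlim (GG v w) t (GG v w t).
Proof. intros; apply vcont_rlim, (cont_G p v w z t0 t1 S); lra. Qed.
Lemma lG t : t0 < t <= t1 -> llim (GG v w) t (GG v w t).
Proof. intros; apply vcont_llim, (cont_G p v w z t0 t1 S); lra. Qed.

Lemma a1_eq : a1 = AA v t1.
Proof. apply (llim_unique (AA v) t1); auto. apply lA; lra. Qed.
Lemma g1_eq : g1 = GG v w t1.
Proof. apply (llim_unique (GG v w) t1); auto. apply lG; lra. Qed.

Ltac ipos := first [ apply (ipv p v w z t0 t1 S) | apply (ipc p v w z t0 t1 S) ]; lra.

Lemma f_a0c t : t0 < t <= t1 -> dot a0 (cc v w t) <> 0.
Proof.
  intros Ht. apply (nz_scale (/ vnorm (cc v w t))); [ipos|].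
  rewrite <- dot_nrm_r. apply (a_I1 _ _ _ _ _ H t0 t); auto; try lra. apply lG; lra.
Qed.

Lemma f_vg0 t : t0 < t <= t1 -> dot (v t) g0 <> 0.
Proof.
  intros Ht. apply (nz_scale (/ vnorm (v t))); [ipos|].
  rewrite <- dot_nrm_l. apply (a_I2 _ _ _ _ _ H t0 t); auto; try lra. apply lA; lra.
Qed.

Lemma f_vg1 t : t0 <= t < t1 -> t0 < t -> dot (v t) g1 <> 0.
Proof.
  intros Ht Ht'. apply (nz_scale (/ vnorm (v t))); [ipos|].
  rewrite <- dot_nrm_l. apply (a_I1 _ _ _ _ _ H t t1); auto; try lra. apply rA; lra.
Qed.

Lemma f_a1c t : t0 < t < t1 -> dot a1 (cc v w t) <> 0.
Proof.
  intros Ht. apply (nz_scale (/ vnorm (cc v w t))); [ipos|].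
  rewrite <- dot_nrm_r. apply (a_I2 _ _ _ _ _ H t t1); auto; try lra. apply rG; lra.
Qed.

Lemma f_a0g1 : dot a0 g1 <> 0.
Proof. apply (a_I1 _ _ _ _ _ H t0 t1); auto; lra. Qed.
Lemma f_a1g0 : dot a1 g0 <> 0.
Proof. apply (a_I2 _ _ _ _ _ H t0 t1); auto; lra. Qed.

Lemma f_Ac_lt u t : t0 < u -> u < t -> t <= t1 -> dot (AA v u) (cc v w t) <> 0.
Proof.
  intros. apply (nz_scale (/ vnorm (cc v w t))); [ipos|].
  rewrite <- dot_nrm_r. apply (a_I1 _ _ _ _ _ H u t); try lra. apply rA; lra. apply lG; lra.
Qed.
Lemma f_Ac_gt u t : t0 < t -> t < u -> u <= t1 -> dot (AA v u) (cc v w t) <> 0.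
Proof.
  intros. apply (nz_scale (/ vnorm (cc v w t))); [ipos|].
  rewrite <- dot_nrm_r. apply (a_I2 _ _ _ _ _ H t u); try lra. apply lA; lra. apply rG; lra.
Qed.

Lemma f_II0 t : t0 < t <= t1 -> dot (cross a0 (vsub (p t) (p t0))) (v t) <> 0.
Proof.
  intros. apply (nz_scale (/ vnorm (v t))); [ipos|].
  rewrite <- dot_nrm_r. apply (a_II _ _ _ _ _ H t0 t); auto; try lra. apply lA; lra.
Qed.
Lemma f_II1 t : t0 < t < t1 -> dot (cross (v t) (vsub (p t1) (p t))) a1 <> 0.
Proof.
  intros. apply (nz_scale (/ vnorm (v t))); [ipos|].
  replace (/ vnorm (v t) * dot (cross (v t) (vsub (p t1) (p t))) a1) with
    (dot (cross (AA v t) (vsub (p t1) (p t))) a1)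
    by (unfold AA, nrm, dot, cross, vscale; simpl; ring).
  apply (a_II _ _ _ _ _ H t t1); auto; try lra. apply rA; lra.
Qed.
Lemma f_II01 : dot (cross a0 (vsub (p t1) (p t0))) a1 <> 0.
Proof. apply (a_II _ _ _ _ _ H t0 t1); auto; lra. Qed.
Lemma f_IIin s1 s2 : t0 < s1 -> s1 < s2 -> s2 <= t1 ->
  dot (cross (AA v s1) (vsub (p s2) (p s1))) (AA v s2) <> 0.
Proof. intros. apply (a_II _ _ _ _ _ H s1 s2); try lra. apply rA; lra. apply lA; lra. Qed.

Lemma f_III0 t : t0 < t <= t1 -> dot (vsub (p t0) (p t)) (cc v w t) <> 0.
Proof.
  intros. apply (nz_scale (/ vnorm (cc v w t))); [ipos|].
  rewrite <- dot_nrm_r. apply (a_III1 _ _ _ _ _ H t0 t); auto; try lra. apply lG; lra.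
Qed.
Lemma f_III1 t : t0 < t < t1 -> dot (vsub (p t1) (p t)) (cc v w t) <> 0.
Proof.
  intros. apply (nz_scale (/ vnorm (cc v w t))); [ipos|].
  rewrite <- dot_nrm_r. apply (a_III2 _ _ _ _ _ H t t1); auto; try lra. apply rG; lra.
Qed.
Lemma f_III01 : dot (vsub (p t0) (p t1)) g1 <> 0.
Proof. apply (a_III1 _ _ _ _ _ H t0 t1); auto; lra. Qed.
Lemma f_III10 : dot (vsub (p t1) (p t0)) g0 <> 0.
Proof. apply (a_III2 _ _ _ _ _ H t0 t1); auto; lra. Qed.

End Facts.

Section Edge.
Context (p v w z : R -> V3) (t0 t1 : R) (S : Setup p v w z t0 t1).

Definition lam (P e : V3) (s : R) := dot (vsub (p s) P) (cc v w s) / dot e (cc v w s).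
Definition Kd (P e : V3) (s : R) := - det3 (v s) (w s) (z s) * det3 (vsub (p s) P) e (v s).

Lemma lam_deriv P e t : t0 <= t <= t1 -> dot e (cc v w t) <> 0 ->
  derivable_pt_lim (lam P e) t (Kd P e t / Rsqr (dot e (cc v w t))).
Proof.
  intros Ht He.
  assert (Dp := s_dp _ _ _ _ _ _ S t Ht). assert (Dv := s_dv _ _ _ _ _ _ S t Ht).
  assert (Dw := s_dw _ _ _ _ _ _ S t Ht).
  assert (Dc := vder_cross v w t (w t) (z t) Dv Dw).
  assert (DN := vder_dot (fun s => vsub (p s) P) (fun s => cross (v s) (w s)) t _ _
                  (vder_sub p (fun _ => P) t _ _ Dp (vder_const P t)) Dc).
  assert (DE := vder_dot (fun _ => e) (fun s => cross (v s) (w s)) t _ _ (vder_const e t) Dc).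
  pose proof (derivable_pt_lim_div _ _ t _ _ DN DE He) as Q.
  unfold div_fct in Q. unfold lam, cc.
  eapply deq; [exact Q|]. unfold Kd, cc, Rdiv. f_equal.
  generalize (v t) (w t) (z t) (p t). intros [a1 a2 a3] [b1 b2 b3] [c1 c2 c3] [d1 d2 d3].
  destruct P as [e1 e2 e3], e as [f1 f2 f3]. unfold det3, dot, cross, vsub, vadd, v0; simpl. ring.
Qed.

Lemma cont_D t : t0 <= t <= t1 -> continuity_pt (fun s => det3 (v s) (w s) (z s)) t.
Proof.
  intros. unfold det3. apply cdot. apply (cont_v p v w z t0 t1 S); auto.
  apply vcont_cross; [apply (cont_w p v w z t0 t1 S); auto| apply (s_cz _ _ _ _ _ _ S); auto].
Qed.

Lemma cont_det P e t : t0 <= t <= t1 -> continuity_pt (fun s => det3 (vsub (p s) P) e (v s)) t.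
Proof.
  intros. unfold det3. apply cdot. apply vcont_sub; [apply (cont_p p v w z t0 t1 S); auto|apply vcont_const].
  apply vcont_cross; [apply vcont_const| apply (cont_v p v w z t0 t1 S); auto].
Qed.

Lemma Kd_sign P e x y : t0 < x < t1 -> t0 < y < t1 ->
  (forall s, t0 < s < t1 -> det3 (vsub (p s) P) e (v s) <> 0) ->
  Kd P e x * Kd P e y > 0.
Proof.
  intros Hx Hy Hn. unfold Kd.
  assert (A := sign_open (fun s => det3 (v s) (w s) (z s)) t0 t1 x y Hx Hy
     (fun s Hs => cont_D s ltac:(lra)) (fun s Hs => s_D _ _ _ _ _ _ S s ltac:(lra))).
  assert (B := sign_open (fun s => det3 (vsub (p s) P) e (v s)) t0 t1 x y Hx Hy
     (fun s Hs => cont_det P e s ltac:(lra)) Hn).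
  simpl in A, B.
  replace (- det3 (v x) (w x) (z x) * det3 (vsub (p x) P) e (v x) *
    (- det3 (v y) (w y) (z y) * det3 (vsub (p y) P) e (v y))) with
    ((det3 (v x) (w x) (z x) * det3 (v y) (w y) (z y)) *
     (det3 (vsub (p x) P) e (v x) * det3 (vsub (p y) P) e (v y))) by ring.
  apply Rmult_gt_0_compat; auto.
Qed.

Lemma sq_pos x : x <> 0 -> 0 < Rsqr x.
Proof. intros; apply Rsqr_pos_lt; auto. Qed.

Lemma edge_incr P e t : t0 < t < t1 ->
  (forall s, t0 < s < t1 -> dot e (cc v w s) <> 0) ->
  (forall s, t0 < s < t1 -> det3 (vsub (p s) P) e (v s) <> 0) ->
  Kd P e t > 0 -> forall x y, t0 < x -> x < y -> y < t1 -> lam P e x < lam P e y.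
Proof.
  intros Ht HE Hn Kp.
  apply (incr_of_deriv (lam P e) (fun s => Kd P e s / Rsqr (dot e (cc v w s))) t0 t1).
  - intros x Hx. apply lam_deriv; [lra| apply HE; auto].
  - intros x Hx. pose proof (Kd_sign P e x t Hx Ht Hn).
    assert (0 < Rsqr (dot e (cc v w x))) by (apply sq_pos, HE; auto).
    unfold Rdiv. apply Rmult_gt_0_compat; [nra| apply Rinv_0_lt_compat; auto].
Qed.

Lemma edge_decr P e t : t0 < t < t1 ->
  (forall s, t0 < s < t1 -> dot e (cc v w s) <> 0) ->
  (forall s, t0 < s < t1 -> det3 (vsub (p s) P) e (v s) <> 0) ->
  Kd P e t < 0 -> forall x y, t0 < x -> x < y -> y < t1 -> lam P e y < lam P e x.
Proof.
  intros Ht HE Hn Kp.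
  apply (decr_of_deriv (lam P e) (fun s => Kd P e s / Rsqr (dot e (cc v w s))) t0 t1).
  - intros x Hx. apply lam_deriv; [lra| apply HE; auto].
  - intros x Hx. pose proof (Kd_sign P e x t Hx Ht Hn).
    assert (0 < Rsqr (dot e (cc v w x))) by (apply sq_pos, HE; auto).
    assert (Kd P e x < 0) by nra.
    unfold Rdiv. assert (0 < / Rsqr (dot e (cc v w x))) by (apply Rinv_0_lt_compat; auto). nra.
Qed.

Lemma Kd_nz P e t : t0 < t < t1 ->
  (forall s, t0 < s < t1 -> det3 (vsub (p s) P) e (v s) <> 0) -> Kd P e t <> 0.
Proof.
  intros Ht Hn. unfold Kd. apply Rmult_integral_contrapositive. split.
  - apply Ropp_neq_0_compat, (s_D _ _ _ _ _ _ S); lra.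
  - apply Hn; auto.
Qed.

Lemma edge_mono P e :
  (forall s, t0 < s < t1 -> dot e (cc v w s) <> 0) ->
  (forall s, t0 < s < t1 -> det3 (vsub (p s) P) e (v s) <> 0) ->
  smono t0 t1 (lam P e).
Proof.
  intros HE Hn. assert (lt := s_lt _ _ _ _ _ _ S).
  set (m := (t0 + t1) / 2). assert (Hm : t0 < m < t1) by (unfold m; lra).
  destruct (Rlt_or_le 0 (Kd P e m)) as [K|K].
  - left. apply (edge_incr P e m); auto.
  - right. apply (edge_decr P e m); auto. assert (Kd P e m <> 0) by (apply Kd_nz; auto). lra.
Qed.
End Edge.

Ltac vring_pre := unfold det3, dot, cross, vsub, vadd, vscale, v0, nrm, AA, GG, cc in *; simpl in *.
Ltac vring := unfold det3, dot, cross, vsub, vadd, vscale, v0, nrm, AA, GG, cc in *; simpl in *; ring.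

Lemma triple_x u d v g : vx (cross d v) * dot u g + vx (cross v u) * dot d g + vx (cross u d) * dot v g = det3 u d v * vx g.
Proof. vring. Qed.
Lemma triple_y u d v g : vy (cross d v) * dot u g + vy (cross v u) * dot d g + vy (cross u d) * dot v g = det3 u d v * vy g.
Proof. vring. Qed.
Lemma triple_z u d v g : vz (cross d v) * dot u g + vz (cross v u) * dot d g + vz (cross u d) * dot v g = det3 u d v * vz g.
Proof. vring. Qed.
Lemma bac_x d v g : vx d * dot v g = vx v * dot d g - vx (cross (cross d v) g).
Proof. vring. Qed.
Lemma bac_y d v g : vy d * dot v g = vy v * dot d g - vy (cross (cross d v) g).
Proof. vring. Qed.
Lemma bac_z d v g : vz d * dot v g = vz v * dot d g - vz (cross (cross d v) g).
Proof. vring. Qed.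

Lemma elim_lemma a b H G h0 h1 : a * H + b * h0 = 0 -> a * G + b * h1 = 0 ->
  H * h1 - G * h0 <> 0 -> a = 0.
Proof.
  intros E1 E2 N. assert (a * (H * h1 - G * h0) = 0).
  { replace (a * (H * h1 - G * h0)) with ((a * H + b * h0) * h1 - (a * G + b * h1) * h0) by ring.
    rewrite E1, E2. ring. }
  apply Rmult_integral in H0. destruct H0; auto. contradiction.
Qed.

Section Main.
Context (p v w z : R -> V3) (t0 t1 : R) (S : Setup p v w z t0 t1)
  (H : Adm p (AA v) (GG v w) t0 t1) (a0 g0 a1 g1 : V3)
  (Ha0 : rlim (AA v) t0 a0) (Hg0 : rlim (GG v w) t0 g0)
  (Ha1 : llim (AA v) t1 a1) (Hg1 : llim (GG v w) t1 g1) (l m : R).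

Let r0 := p t0.
Let r3 := p t1.
Let r1 := vadd r0 (vscale l a0).
Let r2 := vadd r3 (vscale m a1).
Context (P1 : dot (vsub r1 r0) g0 = 0) (P2 : dot (vsub r1 r3) g1 = 0)
  (P3 : dot (vsub r2 r0) g0 = 0) (P4 : dot (vsub r2 r3) g1 = 0).

Let lt01 := s_lt _ _ _ _ _ _ S.

Lemma l_nz : l <> 0.
Proof.
  intros E. apply (f_III01 p v w z t0 t1 S H g1 Hg1).
  rewrite <- P2. unfold r1, r0, r3. rewrite E. vring.
Qed.

Lemma m_nz : m <> 0.
Proof.
  intros E. apply (f_III10 p v w z t0 t1 S H g0 Hg0).
  rewrite <- P3. unfold r2, r0, r3. rewrite E. vring.
Qed.

Lemma d_nz : vsub r2 r1 <> v0.
Proof.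
  intros E. apply (f_II01 p v w z t0 t1 S H a0 a1 Ha0 Ha1).
  unfold r1, r2, r0, r3 in *.
  destruct a0 as [x1 x2 x3], a1 as [y1 y2 y3].
  destruct (p t0) as [q1 q2 q3], (p t1) as [u1 u2 u3].
  unfold vsub, vadd, vscale, v0 in E; simpl in E. injection E as E1 E2 E3.
  unfold dot, cross, vsub; simpl.
  assert (u1 - q1 = l * x1 - m * y1) by lra.
  assert (u2 - q2 = l * x2 - m * y2) by lra.
  assert (u3 - q3 = l * x3 - m * y3) by lra.
  rewrite H0, H1, H2. ring.
Qed.


Lemma nzm a b : a <> 0 -> b <> 0 -> a * b <> 0.
Proof. intros; apply Rmult_integral_contrapositive; auto. Qed.

Lemma E01_eq s : dot (vsub r1 r0) (cc v w s) = l * dot a0 (cc v w s).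
Proof. unfold r1, r0. vring. Qed.
Lemma E01_nz s : t0 < s < t1 -> dot (vsub r1 r0) (cc v w s) <> 0.
Proof. intros. rewrite E01_eq. apply nzm; [apply l_nz|]. eapply f_a0c; eauto. lra. Qed.

Lemma det01_eq s : det3 (vsub (p s) r0) (vsub r1 r0) (v s) =
  - l * dot (cross a0 (vsub (p s) (p t0))) (v s).
Proof. unfold r1, r0. vring. Qed.
Lemma det01_nz s : t0 < s < t1 -> det3 (vsub (p s) r0) (vsub r1 r0) (v s) <> 0.
Proof.
  intros. rewrite det01_eq. apply nzm; [apply Ropp_neq_0_compat, l_nz|]. eapply f_II0; eauto. lra.
Qed.

Lemma E23_eq s : dot (vsub r3 r2) (cc v w s) = - m * dot a1 (cc v w s).
Proof. unfold r2, r3. vring. Qed.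
Lemma E23_nz s : t0 < s < t1 -> dot (vsub r3 r2) (cc v w s) <> 0.
Proof. intros. rewrite E23_eq. apply nzm; [apply Ropp_neq_0_compat, m_nz|]. eapply f_a1c; eauto. Qed.

Lemma det23_eq s : det3 (vsub (p s) r2) (vsub r3 r2) (v s) =
  m * dot (cross (v s) (vsub (p t1) (p s))) a1.
Proof. unfold r2, r3. vring. Qed.
Lemma det23_nz s : t0 < s < t1 -> det3 (vsub (p s) r2) (vsub r3 r2) (v s) <> 0.
Proof. intros. rewrite det23_eq. apply nzm; [apply m_nz|]. eapply f_II1; eauto. Qed.

Lemma E01_nz' : dot (vsub r1 r0) (cc v w t1) <> 0.
Proof. rewrite E01_eq. apply nzm; [apply l_nz|]. eapply f_a0c; eauto. lra. Qed.

Lemma mono01 : smono t0 t1 (lam p v w r0 (vsub r1 r0)).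
Proof. apply (edge_mono p v w z t0 t1 S); [apply E01_nz|apply det01_nz]. Qed.
Lemma mono23 : smono t0 t1 (lam p v w r2 (vsub r3 r2)).
Proof. apply (edge_mono p v w z t0 t1 S); [apply E23_nz|apply det23_nz]. Qed.


Lemma c_t1_perp x : dot x g1 = 0 -> dot x (cc v w t1) = 0.
Proof.
  intros E. rewrite (g1_eq p v w z t0 t1 S g1 Hg1) in E. unfold GG in E.
  rewrite dot_nrm_r in E. apply Rmult_integral in E. destruct E as [E|E]; auto.
  exfalso. assert (0 < / vnorm (cc v w t1)) by (eapply ipc; eauto; lra). lra.
Qed.

Lemma lim01 : forall eps, 0 < eps -> exists del, 0 < del /\ forall s, t1 - del < s < t1 -> Rabs (lam p v w r0 (vsub r1 r0) s - 1) < eps.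
Proof.
  assert (Hc : continuity_pt (lam p v w r0 (vsub r1 r0)) t1).
  { unfold lam. apply cmult.
    - apply cdot. apply vcont_sub; [eapply cont_p; eauto; lra|apply vcont_const]. eapply cont_c; eauto; lra.
    - apply cinv. apply cdot; [apply vcont_const|eapply cont_c; eauto; lra].
      apply E01_nz'. }
  assert (Hv : lam p v w r0 (vsub r1 r0) t1 = 1).
  { unfold lam. assert (Q := c_t1_perp _ P2).
    replace (dot (vsub (p t1) r0) (cc v w t1)) with (dot (vsub r1 r0) (cc v w t1)).
    - field. apply E01_nz'.
    - revert Q. unfold r3. vring_pre. intros Q. nra. }
  intros eps He. destruct (LL_eps _ _ _ (cont_LL _ _ Hc) eps He) as [d [Hd K]].
  exists d. split; auto. intros s Hs. rewrite <- Hv. auto.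
Qed.

Lemma lim23 : forall eps, 0 < eps -> exists del, 0 < del /\ forall s, t0 < s < t0 + del ->
  Rabs (lam p v w r2 (vsub r3 r2) s - 0) < eps.
Proof.
  set (f := fun s => dot (vsub (p s) r2) (GG v w s) / dot (vsub r3 r2) (GG v w s)).
  assert (Hden : dot (vsub r3 r2) g0 <> 0).
  { replace (dot (vsub r3 r2) g0) with (- m * dot a1 g0) by (unfold r2, r3; vring).
    apply nzm; [apply Ropp_neq_0_compat, m_nz|]. eapply f_a1g0; eauto. }
  assert (Hl : RL f t0 (dot (vsub r0 r2) g0 / dot (vsub r3 r2) g0)).
  { assert (G0 : vRL (GG v w) t0 g0) by (apply rlim_vRL; auto).
    apply RL_div; auto; apply RL_dot; auto.
    - apply (vcont_vRL (fun s => vsub (p s) r2)). apply vcont_sub; [eapply cont_p; eauto; lra|apply vcont_const].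
    - apply (vcont_vRL (fun _ => vsub r3 r2)). apply vcont_const. }
  assert (Hz : dot (vsub r0 r2) g0 = 0).
  { replace (dot (vsub r0 r2) g0) with (- dot (vsub r2 r0) g0) by vring. rewrite P3. ring. }
  rewrite Hz in Hl. unfold Rdiv in Hl. rewrite Rmult_0_l in Hl.
  intros eps He. destruct (RL_eps _ _ _ Hl eps He) as [d [Hd K]].
  exists (Rmin d (t1 - t0)). split; [apply Rmin_pos; lra|].
  intros s Hs. pose proof (Rmin_l d (t1 - t0)). pose proof (Rmin_r d (t1 - t0)).
  replace (lam p v w r2 (vsub r3 r2) s) with (f s). { apply K. lra. }
  unfold f, lam, GG. rewrite !dot_nrm_r. field. split.
  - apply E23_nz; lra.
  - apply Rgt_not_eq, vnorm_pos. eapply s_c; eauto. lra.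
Qed.


Lemma claimY t : t0 < t < t1 -> dot a0 (cc v w t) * dot a1 (cc v w t) > 0.
Proof.
  intros Ht. set (c := cc v w t).
  set (d0 := Rmin (t - t0) (t1 - t)).
  assert (Hd0 : 0 < d0) by (apply Rmin_pos; lra).
  pose proof (Rmin_l (t - t0) (t1 - t)). pose proof (Rmin_r (t - t0) (t1 - t)).
  assert (Hin : forall x, Rabs (x - t) < d0 -> t0 < x < t1).
  { intros x Hx. apply Rabs_def2 in Hx. unfold d0 in *. lra. }
  destruct (local_sign2 (fun x => dot (v x) c) (fun x => dot (w x) c) t
             (det3 (v t) (w t) (z t)) d0 Hd0) as [dl [Hdl K]].
  - intros x Hx. specialize (Hin x Hx).
    eapply deq; [apply (vder_dot v (fun _ => c) x (w x) v0); [eapply s_dv; eauto; lra|apply vder_const]|].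
    vring.
  - unfold c. vring.
  - unfold c. vring.
  - eapply deq; [apply (vder_dot w (fun _ => c) t (z t) v0); [eapply s_dw; eauto; lra|apply vder_const]|].
    unfold c. vring.
  - eapply s_D; eauto; lra.
  - set (e := Rmin dl d0 / 2).
    pose proof (Rmin_l dl d0). pose proof (Rmin_r dl d0).
    assert (He : 0 < e) by (unfold e; assert (0 < Rmin dl d0) by (apply Rmin_pos; lra); lra).
    assert (K1 := K (t - e)). assert (K2 := K (t + e)).
    replace (t - e - t) with (- e) in K1 by ring. replace (t + e - t) with e in K2 by ring.
    rewrite Rabs_Ropp, Rabs_right in K1 by lra. rewrite Rabs_right in K2 by lra.
    assert (G1 : dot (v (t - e)) c * det3 (v t) (w t) (z t) > 0) by (apply K1; unfold e in *; lra).
    assert (G2 : dot (v (t + e)) c * det3 (v t) (w t) (z t) > 0) by (apply K2; unfold e in *; lra).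
    assert (Hx1 : t0 < t - e) by (unfold e, d0 in *; lra).
    assert (Hx2 : t + e < t1) by (unfold e, d0 in *; lra).
    assert (A0 : dot a0 c * dot (AA v (t - e)) c > 0).
    { apply (limit_sign (fun s => dot (AA v s) c) t0 (t - e)); auto.
      - apply RL_eps. apply RL_dot; [apply rlim_vRL; auto|apply (vcont_vRL (fun _ => c)), vcont_const].
      - eapply f_a0c; eauto; lra.
      - intros s Hs. apply (sign_interval (fun u => dot (AA v u) c) s (t - e)); try lra.
        + intros u Hu. apply cdot; [eapply cont_A; eauto; lra|apply vcont_const].
        + intros u Hu. eapply f_Ac_lt; eauto; lra. }
    assert (A1 : dot (AA v (t + e)) c * dot (AA v t1) c > 0).
    { apply (sign_interval (fun u => dot (AA v u) c) (t + e) t1); try lra.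
      + intros u Hu. apply cdot; [eapply cont_A; eauto; lra|apply vcont_const].
      + intros u Hu. eapply f_Ac_gt; eauto; lra. }
    rewrite <- (a1_eq p v w z t0 t1 S a1 Ha1) in A1.
    unfold AA in A0, A1. rewrite dot_nrm_l in A0, A1.
    apply scale_pos_r in A0; [|eapply ipv; eauto; lra].
    apply scale_pos_l in A1; [|eapply ipv; eauto; lra].
    apply (chain2 _ (dot (v (t - e)) c)); auto.
    apply (chain2 _ (det3 (v t) (w t) (z t))); auto.
    apply (chain2 _ (dot (v (t + e)) c)); auto.
    rewrite Rmult_comm; auto.
Qed.


Definition Phi (s1 s2 : R) := dot (cross (AA v s1) (vsub (p s2) (p s1))) (AA v s2).

Lemma claimX t : t0 < t < t1 ->
  dot (cross a0 (vsub (p t) (p t0))) (v t) * dot (cross (v t) (vsub (p t1) (p t))) a1 > 0.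
Proof.
  intros Ht.
  set (M := Phi t t1).
  assert (Cl : forall s, t0 < s < t -> Phi s t * M > 0).
  { intros s Hs. apply (chain2 _ (Phi s t1)).
    - apply (sign_interval (fun u => Phi s u) t t1); try lra.
      + intros u Hu. unfold Phi. apply cdot.
        * apply vcont_cross; [apply vcont_const|apply vcont_sub; [eapply cont_p; eauto; lra|apply vcont_const]].
        * eapply cont_A; eauto; lra.
      + intros u Hu. unfold Phi. eapply f_IIin; eauto; lra.
    - apply (sign_interval (fun u => Phi u t1) s t); try lra.
      + intros u Hu. unfold Phi. apply cdot.
        * apply vcont_cross; [eapply cont_A; eauto; lra|apply vcont_sub; [apply vcont_const|eapply cont_p; eauto; lra]].
        * apply vcont_const.
      + intros u Hu. unfold Phi. eapply f_IIin; eauto; lra. }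
  assert (Lm : dot a0 (cross (vsub (p t) (p t0)) (AA v t)) * M > 0).
  { apply (limit_sign (fun s => dot (AA v s) (cross (vsub (p t) (p s)) (AA v t))) t0 t); try lra.
    - apply RL_eps. apply RL_dot; [apply rlim_vRL; auto|].
      apply (vcont_vRL (fun s => cross (vsub (p t) (p s)) (AA v t))).
      apply vcont_cross; [apply vcont_sub; [apply vcont_const|eapply cont_p; eauto; lra]|apply vcont_const].
    - replace (dot a0 (cross (vsub (p t) (p t0)) (AA v t))) with
        (/ vnorm (v t) * dot (cross a0 (vsub (p t) (p t0))) (v t)) by vring.
      apply nzm; [apply Rgt_not_eq; eapply ipv; eauto; lra|eapply f_II0; eauto; lra].
    - intros s Hs. replace (dot (AA v s) (cross (vsub (p t) (p s)) (AA v t))) with (Phi s t)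
        by (unfold Phi; vring). auto. }
  unfold M, Phi in Lm. rewrite <- (a1_eq p v w z t0 t1 S a1 Ha1) in Lm.
  replace (dot a0 (cross (vsub (p t) (p t0)) (AA v t))) with
     (/ vnorm (v t) * dot (cross a0 (vsub (p t) (p t0))) (v t)) in Lm by vring.
  replace (dot (cross (AA v t) (vsub (p t1) (p t))) a1) with
     (/ vnorm (v t) * dot (cross (v t) (vsub (p t1) (p t))) a1) in Lm by vring.
  apply scale_pos_l in Lm; [|eapply ipv; eauto; lra].
  apply scale_pos_r in Lm; [|eapply ipv; eauto; lra]. exact Lm.
Qed.


Lemma Hsign t : t0 < t < t1 -> dot (vsub (p t) r0) g0 * dot (v t) g0 > 0.
Proof.
  intros Ht.
  destruct (MVT_cor2 (fun s => dot (vsub (p s) r0) g0) (fun s => dot (v s) g0) t0 t) as [xi [E Hxi]]; [lra| |].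
  - intros c Hc. eapply deq.
    + apply (vder_dot (fun s => vsub (p s) r0) (fun _ => g0) c (vsub (v c) v0) v0).
      * apply vder_sub; [eapply s_dp; eauto; lra|apply vder_const].
      * apply vder_const.
    + vring.
  - assert (Z : dot (vsub (p t0) r0) g0 = 0) by (unfold r0; vring).
    rewrite Z, Rminus_0_r in E. rewrite E.
    assert (Q : dot (v xi) g0 * dot (v t) g0 > 0).
    { apply (sign_interval (fun u => dot (v u) g0) xi t); try lra.
      + intros u Hu. apply cdot; [eapply cont_v; eauto; lra|apply vcont_const].
      + intros u Hu. eapply f_vg0; eauto; lra. }
    replace (dot (v xi) g0 * (t - t0) * dot (v t) g0) with ((dot (v xi) g0 * dot (v t) g0) * (t - t0)) by ring.
    apply Rmult_gt_0_compat; lra.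
Qed.

Lemma Gsign t : t0 < t < t1 -> dot (vsub (p t) r3) g1 * dot (v t) g1 < 0.
Proof.
  intros Ht.
  destruct (MVT_cor2 (fun s => dot (vsub (p s) r3) g1) (fun s => dot (v s) g1) t t1) as [xi [E Hxi]]; [lra| |].
  - intros c Hc. eapply deq.
    + apply (vder_dot (fun s => vsub (p s) r3) (fun _ => g1) c (vsub (v c) v0) v0).
      * apply vder_sub; [eapply s_dp; eauto; lra|apply vder_const].
      * apply vder_const.
    + vring.
  - assert (Z : dot (vsub (p t1) r3) g1 = 0) by (unfold r3; vring).
    rewrite Z in E.
    assert (E' : dot (vsub (p t) r3) g1 = - (dot (v xi) g1 * (t1 - t))) by lra. rewrite E'.
    assert (Q : dot (v t) g1 * dot (v xi) g1 > 0).
    { apply (sign_interval (fun u => dot (v u) g1) t xi); try lra.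
      + intros u Hu. apply cdot; [eapply cont_v; eauto; lra|apply vcont_const].
      + intros u Hu. eapply f_vg1; eauto; lra. }
    replace (- (dot (v xi) g1 * (t1 - t)) * dot (v t) g1) with (- ((dot (v t) g1 * dot (v xi) g1) * (t1 - t))) by ring.
    assert (0 < (dot (v t) g1 * dot (v xi) g1) * (t1 - t)) by (apply Rmult_gt_0_compat; lra). lra.
Qed.


Lemma dg0 : dot (vsub r2 r1) g0 = 0.
Proof.
  replace (dot (vsub r2 r1) g0) with (dot (vsub r2 r0) g0 - dot (vsub r1 r0) g0) by vring.
  rewrite P1, P3. ring.
Qed.
Lemma dg1 : dot (vsub r2 r1) g1 = 0.
Proof.
  replace (dot (vsub r2 r1) g1) with (dot (vsub r2 r3) g1 - dot (vsub r1 r3) g1) by vring.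
  rewrite P2, P4. ring.
Qed.

Lemma det12_nz t : t0 < t < t1 -> det3 (vsub (p t) r1) (vsub r2 r1) (v t) <> 0.
Proof.
  intros Ht Edet.
  set (u := vsub (p t) r1) in *. set (d := vsub r2 r1) in *. set (vt := v t) in *.
  set (Hh := dot (vsub (p t) r0) g0). set (Gg := dot (vsub (p t) r3) g1).
  set (h0 := dot vt g0). set (h1 := dot vt g1).
  assert (ug0 : dot u g0 = Hh).
  { unfold Hh, u. replace (dot (vsub (p t) r1) g0) with (dot (vsub (p t) r0) g0 - dot (vsub r1 r0) g0) by vring.
    rewrite P1. ring. }
  assert (ug1 : dot u g1 = Gg).
  { unfold Gg, u. replace (dot (vsub (p t) r1) g1) with (dot (vsub (p t) r3) g1 - dot (vsub r1 r3) g1) by vring.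
    rewrite P2. ring. }
  assert (D0 := dg0). assert (D1 := dg1). fold d in D0, D1.
  assert (HH := Hsign t Ht). assert (GG1 := Gsign t Ht). fold vt in HH, GG1. fold Hh h0 Gg h1 in HH, GG1.
  assert (h0nz : h0 <> 0) by (intro E; rewrite E in HH; lra).
  assert (h1nz : h1 <> 0) by (intro E; rewrite E in GG1; lra).
  assert (N : Hh * h1 - Gg * h0 <> 0).
  { intro E. assert (Hh * h1 * (h0 * h1) = Gg * h0 * (h0 * h1)) by (rewrite <- (Rplus_0_r (Gg * h0)), <- E; ring).
    assert (0 < h1 * h1) by (apply Rsqr_pos_lt in h1nz; unfold Rsqr in h1nz; lra).
    assert (0 < h0 * h0) by (apply Rsqr_pos_lt in h0nz; unfold Rsqr in h0nz; lra).
    assert (Hh * h1 * (h0 * h1) = (Hh * h0) * (h1 * h1)) by ring.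
    assert (Gg * h0 * (h0 * h1) = (Gg * h1) * (h0 * h0)) by ring.
    assert (0 < (Hh * h0) * (h1 * h1)) by (apply Rmult_gt_0_compat; lra).
    assert ((Gg * h1) * (h0 * h0) < 0).
    { assert (0 < (- (Gg * h1)) * (h0 * h0)) by (apply Rmult_gt_0_compat; lra). lra. }
    lra. }
  assert (Cx : vx (cross d vt) = 0).
  { apply (elim_lemma _ (vx (cross u d)) Hh Gg h0 h1); auto.
    - pose proof (triple_x u d vt g0) as T. rewrite Edet, D0, ug0 in T. fold h0 in T. lra.
    - pose proof (triple_x u d vt g1) as T. rewrite Edet, D1, ug1 in T. fold h1 in T. lra. }
  assert (Cy : vy (cross d vt) = 0).
  { apply (elim_lemma _ (vy (cross u d)) Hh Gg h0 h1); auto.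
    - pose proof (triple_y u d vt g0) as T. rewrite Edet, D0, ug0 in T. fold h0 in T. lra.
    - pose proof (triple_y u d vt g1) as T. rewrite Edet, D1, ug1 in T. fold h1 in T. lra. }
  assert (Cz : vz (cross d vt) = 0).
  { apply (elim_lemma _ (vz (cross u d)) Hh Gg h0 h1); auto.
    - pose proof (triple_z u d vt g0) as T. rewrite Edet, D0, ug0 in T. fold h0 in T. lra.
    - pose proof (triple_z u d vt g1) as T. rewrite Edet, D1, ug1 in T. fold h1 in T. lra. }
  assert (C0 : cross d vt = v0).
  { destruct (cross d vt) as [c1 c2 c3]; simpl in *; subst; reflexivity. }
  apply d_nz. fold d.
  pose proof (bac_x d vt g0) as Bx. pose proof (bac_y d vt g0) as By. pose proof (bac_z d vt g0) as Bz.
  rewrite C0, D0 in Bx, By, Bz. fold h0 in Bx, By, Bz.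
  assert (X1 : vx d * h0 = 0) by (rewrite Bx; unfold cross, v0; simpl; ring).
  assert (X2 : vy d * h0 = 0) by (rewrite By; unfold cross, v0; simpl; ring).
  assert (X3 : vz d * h0 = 0) by (rewrite Bz; unfold cross, v0; simpl; ring).
  apply Rmult_integral in X1; apply Rmult_integral in X2; apply Rmult_integral in X3.
  apply V3_ext; simpl; [destruct X1|destruct X2|destruct X3]; auto; contradiction.
Qed.


Lemma dir01 t : t0 < t < t1 ->
  (lam p v w r0 (vsub r1 r0) t - 1) * Kd p v w z r0 (vsub r1 r0) t < 0.
Proof.
  intros Ht.
  assert (Kn := Kd_nz p v w z t0 t1 S r0 (vsub r1 r0) t Ht det01_nz).
  destruct (Rlt_or_le 0 (Kd p v w z r0 (vsub r1 r0) t)) as [K|K].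
  - assert (I := edge_incr p v w z t0 t1 S r0 (vsub r1 r0) t Ht E01_nz det01_nz K).
    assert (Q := incr_left_lt _ t0 t1 1 I lim01 t Ht).
    assert (0 < (1 - lam p v w r0 (vsub r1 r0) t) * Kd p v w z r0 (vsub r1 r0) t) by (apply Rmult_gt_0_compat; lra).
    lra.
  - assert (K' : Kd p v w z r0 (vsub r1 r0) t < 0) by lra.
    assert (I := edge_decr p v w z t0 t1 S r0 (vsub r1 r0) t Ht E01_nz det01_nz K').
    assert (Q := decr_left_gt _ t0 t1 1 I lim01 t Ht).
    assert (0 < (lam p v w r0 (vsub r1 r0) t - 1) * - Kd p v w z r0 (vsub r1 r0) t) by (apply Rmult_gt_0_compat; lra).
    lra.
Qed.

Lemma dir23 t : t0 < t < t1 ->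
  lam p v w r2 (vsub r3 r2) t * Kd p v w z r2 (vsub r3 r2) t > 0.
Proof.
  intros Ht.
  assert (Kn := Kd_nz p v w z t0 t1 S r2 (vsub r3 r2) t Ht det23_nz).
  destruct (Rlt_or_le 0 (Kd p v w z r2 (vsub r3 r2) t)) as [K|K].
  - assert (I := edge_incr p v w z t0 t1 S r2 (vsub r3 r2) t Ht E23_nz det23_nz K).
    assert (Q := incr_right_gt _ t0 t1 0 I lim23 t Ht).
    apply Rmult_gt_0_compat; lra.
  - assert (K' : Kd p v w z r2 (vsub r3 r2) t < 0) by lra.
    assert (I := edge_decr p v w z t0 t1 S r2 (vsub r3 r2) t Ht E23_nz det23_nz K').
    assert (Q := decr_right_lt _ t0 t1 0 I lim23 t Ht).
    assert (0 < (- lam p v w r2 (vsub r3 r2) t) * - Kd p v w z r2 (vsub r3 r2) t) by (apply Rmult_gt_0_compat; lra).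
    lra.
Qed.

Lemma phi_opp t : t0 < t < t1 ->
  dot (vsub (p t) r1) (cc v w t) * dot (vsub (p t) r2) (cc v w t) < 0.
Proof.
  intros Ht.
  set (E1 := dot (vsub r1 r0) (cc v w t)). set (E3 := dot (vsub r3 r2) (cc v w t)).
  set (a := lam p v w r0 (vsub r1 r0) t - 1). set (b := lam p v w r2 (vsub r3 r2) t).
  set (K1 := Kd p v w z r0 (vsub r1 r0) t). set (K2 := Kd p v w z r2 (vsub r3 r2) t).
  assert (HE1 : E1 <> 0) by (apply E01_nz; auto). assert (HE3 : E3 <> 0) by (apply E23_nz; auto).
  assert (F1 : dot (vsub (p t) r1) (cc v w t) = a * E1).
  { unfold a, E1, lam. unfold Rdiv. rewrite Rmult_minus_distr_r, Rmult_assoc, Rinv_l by auto.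
    unfold r1. vring. }
  assert (F2 : dot (vsub (p t) r2) (cc v w t) = b * E3).
  { unfold b, E3, lam. unfold Rdiv. rewrite Rmult_assoc, Rinv_l by auto. ring. }
  rewrite F1, F2.
  assert (Da := dir01 t Ht). assert (Db := dir23 t Ht). fold a K1 in Da. fold b K2 in Db.
  assert (KE : K1 * K2 * (E1 * E3) > 0).
  { unfold K1, K2, Kd, E1, E3. rewrite det01_eq, det23_eq, E01_eq, E23_eq.
    assert (X := claimX t Ht). assert (Y := claimY t Ht).
    assert (Dn : det3 (v t) (w t) (z t) <> 0) by (eapply s_D; eauto; lra).
    assert (ln := l_nz). assert (mn := m_nz).
    set (D := det3 (v t) (w t) (z t)) in *.
    set (X0 := dot (cross a0 (vsub (p t) (p t0))) (v t)) in *.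
    set (X1 := dot (cross (v t) (vsub (p t1) (p t))) a1) in *.
    set (A0 := dot a0 (cc v w t)) in *. set (A1 := dot a1 (cc v w t)) in *.
    replace (- D * (- l * X0) * (- D * (m * X1)) * (l * A0 * (- m * A1))) with
      ((D * D) * (l * l) * (m * m) * (X0 * X1) * (A0 * A1)) by ring.
    assert (0 < D * D) by (apply Rsqr_pos_lt in Dn; exact Dn).
    assert (0 < l * l) by (apply Rsqr_pos_lt in ln; exact ln).
    assert (0 < m * m) by (apply Rsqr_pos_lt in mn; exact mn).
    apply Rmult_gt_0_compat; [apply Rmult_gt_0_compat; [apply Rmult_gt_0_compat; [apply Rmult_gt_0_compat|]|]|]; lra. }
  assert (AB : a * K1 * (b * K2) < 0).
  { assert (0 < - (a * K1) * (b * K2)) by (apply Rmult_gt_0_compat; lra). lra. }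
  assert (K12 : K1 * K2 <> 0) by (intro E; rewrite E in KE; lra).
  assert (Sq : 0 < (K1 * K2) * (K1 * K2)) by (apply Rsqr_pos_lt in K12; exact K12).
  destruct (Rlt_or_le (a * E1 * (b * E3)) 0) as [Q|Q]; auto.
  exfalso.
  assert (0 <= (a * E1 * (b * E3)) * ((K1 * K2) * (K1 * K2))) by (apply Rmult_le_pos; lra).
  assert ((a * E1 * (b * E3)) * ((K1 * K2) * (K1 * K2)) = (a * K1 * (b * K2)) * (K1 * K2 * (E1 * E3))) by ring.
  assert ((a * K1 * (b * K2)) * (K1 * K2 * (E1 * E3)) < 0).
  { assert (0 < - (a * K1 * (b * K2)) * (K1 * K2 * (E1 * E3))) by (apply Rmult_gt_0_compat; lra). lra. }
  lra.
Qed.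

Lemma phi1_nz t : t0 < t < t1 -> dot (vsub (p t) r1) (cc v w t) <> 0.
Proof. intros Ht E. pose proof (phi_opp t Ht). rewrite E in H0. lra. Qed.

Lemma E12_nz t : t0 < t < t1 -> dot (vsub r2 r1) (cc v w t) <> 0.
Proof.
  intros Ht E. pose proof (phi_opp t Ht).
  replace (dot (vsub (p t) r2) (cc v w t)) with (dot (vsub (p t) r1) (cc v w t) - dot (vsub r2 r1) (cc v w t)) in H0 by vring.
  rewrite E, Rminus_0_r in H0. assert (0 <= dot (vsub (p t) r1) (cc v w t) * dot (vsub (p t) r1) (cc v w t)) by apply Rle_0_sqr.
  lra.
Qed.


Lemma mono12 : smono t0 t1 (lam p v w r1 (vsub r2 r1)).
Proof. apply (edge_mono p v w z t0 t1 S); [apply E12_nz|apply det12_nz]. Qed.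

Lemma lam01_nz t : t0 < t < t1 -> lam p v w r0 (vsub r1 r0) t <> 0.
Proof.
  intros Ht E. unfold lam, Rdiv in E. apply Rmult_integral in E. destruct E as [E|E].
  - apply (f_III0 p v w z t0 t1 S H t); [lra|].
    replace (dot (vsub (p t0) (p t)) (cc v w t)) with (- dot (vsub (p t) r0) (cc v w t)) by (unfold r0; vring).
    rewrite E; ring.
  - apply Rinv_neq_0_compat in E; auto. apply E01_nz; auto.
Qed.
Lemma lam12_nz t : t0 < t < t1 -> lam p v w r1 (vsub r2 r1) t <> 0.
Proof.
  intros Ht E. unfold lam, Rdiv in E. apply Rmult_integral in E. destruct E as [E|E].
  - apply (phi1_nz t Ht E).
  - apply Rinv_neq_0_compat in E; auto. apply E12_nz; auto.
Qed.
Lemma lam23_nz t : t0 < t < t1 -> lam p v w r2 (vsub r3 r2) t <> 0.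
Proof.
  intros Ht E. unfold lam, Rdiv in E. apply Rmult_integral in E. destruct E as [E|E].
  - pose proof (phi_opp t Ht). rewrite E in H0. lra.
  - apply Rinv_neq_0_compat in E; auto. apply E23_nz; auto.
Qed.

End Main.

Section Final.
Context (p v w z : R -> V3) (t0 t1 : R) (S : Setup p v w z t0 t1).

Lemma lam_cont P e t : t0 < t < t1 -> dot e (cc v w t) <> 0 -> continuity_pt (lam p v w P e) t.
Proof. intros. eapply dcont. eapply (lam_deriv p v w z t0 t1 S); auto; lra. Qed.

Lemma dist_mono P e K : 0 < K ->
  (forall t, t0 < t < t1 -> dot e (cc v w t) <> 0) ->
  (forall t, t0 < t < t1 -> lam p v w P e t <> 0) ->
  smono t0 t1 (lam p v w P e) ->
  smono t0 t1 (fun t => Rabs (lam p v w P e t) * K).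
Proof.
  intros HK HE Hn Hm. assert (lt := s_lt _ _ _ _ _ _ S).
  set (mid := (t0 + t1) / 2). assert (Hmid : t0 < mid < t1) by (unfold mid; lra).
  assert (Sg : forall x, t0 < x < t1 -> lam p v w P e x * lam p v w P e mid > 0).
  { intros x Hx. apply (sign_open _ t0 t1); auto. intros y Hy. apply lam_cont; auto. }
  destruct (Rlt_or_le 0 (lam p v w P e mid)) as [Pm|Pm].
  - assert (Pos : forall x, t0 < x < t1 -> 0 < lam p v w P e x).
    { intros x Hx. specialize (Sg x Hx). destruct (Rle_or_lt (lam p v w P e x) 0); auto.
      assert (0 <= - lam p v w P e x * lam p v w P e mid) by (apply Rmult_le_pos; lra). lra. }
    destruct Hm as [Hi|Hd]; [left|right]; intros x y H1 H2 H3;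
      rewrite !Rabs_right by (apply Rle_ge, Rlt_le, Pos; lra);
      apply Rmult_lt_compat_r; auto.
  - assert (Pmn : lam p v w P e mid < 0) by (assert (lam p v w P e mid <> 0) by (apply Hn; auto); lra).
    assert (Neg : forall x, t0 < x < t1 -> lam p v w P e x < 0).
    { intros x Hx. specialize (Sg x Hx). destruct (Rle_or_lt 0 (lam p v w P e x)); auto.
      assert (lam p v w P e x * lam p v w P e mid <= 0).
      { assert (0 <= lam p v w P e x * - lam p v w P e mid) by (apply Rmult_le_pos; lra). lra. }
      lra. }
    destruct Hm as [Hi|Hd]; [right|left]; intros x y H1 H2 H3;
      rewrite !Rabs_left by (apply Neg; lra);
      apply Rmult_lt_compat_r; auto.
    + specialize (Hi x y H1 H2 H3). lra.
    + specialize (Hd x y H1 H2 H3). lra.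
Qed.

Definition meetpt (P Q : V3) (t : R) := vadd P (vscale (lam p v w P (vsub Q P) t) (vsub Q P)).

Lemma meet_ok P Q t : t0 < t < t1 -> dot (vsub Q P) (cc v w t) <> 0 ->
  on_line P Q (meetpt P Q t) /\ on_plane (p t) (GG v w t) (meetpt P Q t) /\
  forall Y, on_line P Q Y -> on_plane (p t) (GG v w t) Y -> Y = meetpt P Q t.
Proof.
  intros Ht HE.
  assert (Hk : 0 < / vnorm (cc v w t)) by (eapply ipc; eauto; lra).
  split; [exists (lam p v w P (vsub Q P) t); reflexivity|]. split.
  - unfold on_plane, meetpt, GG. rewrite dot_nrm_r.
    replace (dot (vsub (vadd P (vscale (lam p v w P (vsub Q P) t) (vsub Q P))) (p t)) (cc v w t)) with
      (lam p v w P (vsub Q P) t * dot (vsub Q P) (cc v w t) - dot (vsub (p t) P) (cc v w t)) by vring.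
    assert (Z : lam p v w P (vsub Q P) t * dot (vsub Q P) (cc v w t) - dot (vsub (p t) P) (cc v w t) = 0)
      by (unfold lam; field; auto).
    rewrite Z; ring.
  - intros Y [mu HY] HP. unfold on_plane, GG in HP. rewrite dot_nrm_r in HP.
    apply Rmult_integral in HP. destruct HP as [HP|HP]; [lra|].
    rewrite HY in HP.
    replace (dot (vsub (vadd P (vscale mu (vsub Q P))) (p t)) (cc v w t)) with
      (mu * dot (vsub Q P) (cc v w t) - dot (vsub (p t) P) (cc v w t)) in HP by vring.
    assert (Emu : mu = lam p v w P (vsub Q P) t).
    { unfold lam. apply (Rmult_eq_reg_r (dot (vsub Q P) (cc v w t))); auto.
      unfold Rdiv. rewrite Rmult_assoc, Rinv_l by auto. lra. }
    rewrite HY, Emu. reflexivity.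
Qed.

Lemma dist_eq P Q t : vnorm (vsub (meetpt P Q t) P) = Rabs (lam p v w P (vsub Q P) t) * vnorm (vsub Q P).
Proof.
  unfold meetpt. rewrite <- vnorm_scale. f_equal. vring_pre. f_equal; ring.
Qed.

End Final.

Lemma smono_ext a b f g : (forall t, a < t < b -> f t = g t) -> smono a b f -> smono a b g.
Proof.
  intros E [Hi|Hd]; [left|right]; intros x y H1 H2 H3;
  rewrite <- !E by lra; [apply Hi|apply Hd]; auto.
Qed.

Lemma setup_of (r : curve) (t0 t1 : R) :
  (forall t, t0 <= t <= t1 -> defined_at r t) -> t0 < t1 ->
  (forall s, t0 < s <= t1 -> ~ character_param r s) ->
  Setup (pos r) (d1 r) (d2 r) (d3 r) t0 t1.
Proof.
  intros Hd Hlt Hc. constructor; auto.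
  - intros t Ht. apply pos_der, Hd; auto.
  - intros t Ht. apply (pos_der (rD r)), defined_rD, Hd; auto.
  - intros t Ht. apply (pos_der (rD (rD r))), defined_rD, defined_rD, Hd; auto.
  - intros t Ht. eapply vder_cont. apply (pos_der (rD (rD (rD r)))), defined_rD, defined_rD, defined_rD, Hd; auto.
  - intros t Ht E. apply (Hc t Ht). left. left. exact E.
  - intros t Ht E. apply (Hc t Ht). right. left. unfold curvature. rewrite E.
    unfold vnorm, dot, v0; simpl. replace (0 * 0 + 0 * 0 + 0 * 0) with 0 by ring.
    rewrite sqrt_0. unfold Rdiv. ring.
  - intros t Ht E. apply (Hc t Ht). right. right. exact E.
Qed.

Theorem theorem3 (r : curve) (t0 t1 : R) (r0 r1 r2 r3 : V3) :
  (forall t, t0 <= t <= t1 -> defined_at r t) ->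
  proper_param r ->
  non_planar r ->
  admissible r t0 t1 ->
  assoc_tetrahedron r t0 t1 r0 r1 r2 r3 ->
  exists p01 p12 p23 : R -> V3,
    (forall t, t0 < t < t1 ->
       unique_meet r t r0 r1 (p01 t) /\
       unique_meet r t r1 r2 (p12 t) /\
       unique_meet r t r2 r3 (p23 t)) /\
    strictly_monotone_on t0 t1 (fun t => vnorm (vsub (p01 t) r0)) /\
    strictly_monotone_on t0 t1 (fun t => vnorm (vsub (p12 t) r1)) /\
    strictly_monotone_on t0 t1 (fun t => vnorm (vsub (p23 t) r2)).
Proof.
  intros Hdef _ _ Hadm Htet.
  destruct Hadm as [Hlt [Hch [I1 [I2 [II [III1 III2]]]]]].
  (* note: the (IV) clause is the last conjunct of III2 *)
  destruct III2 as [III2 IV].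
  assert (S := setup_of r t0 t1 Hdef Hlt Hch).
  assert (H : Adm (pos r) (AA (d1 r)) (GG (d1 r) (d2 r)) t0 t1) by (constructor; assumption).
  destruct Htet as [a0 [g0 [a1 [g1 [Ha0 [Hg0 [Ha1 [Hg1 [E0 [E3 [[l T1] [P1 [P2 [[m T2] [P3 P4]]]]]]]]]]]]]]].
  subst r0 r3 r1 r2.
  set (p := pos r) in *. set (v := d1 r) in *. set (w := d2 r) in *.
  exists (meetpt p v w (p t0) (vadd (p t0) (vscale l a0))),
         (meetpt p v w (vadd (p t0) (vscale l a0)) (vadd (p t1) (vscale m a1))),
         (meetpt p v w (vadd (p t1) (vscale m a1)) (p t1)).
  set (z := d3 r) in *.
  set (R0 := p t0). set (R3 := p t1). set (R1 := vadd R0 (vscale l a0)). set (R2 := vadd R3 (vscale m a1)).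
  assert (E01 : forall s, t0 < s < t1 -> dot (vsub R1 R0) (cc v w s) <> 0) by (intros; eapply E01_nz; eauto).
  assert (E12 : forall s, t0 < s < t1 -> dot (vsub R2 R1) (cc v w s) <> 0) by (intros; eapply E12_nz; eauto).
  assert (E23 : forall s, t0 < s < t1 -> dot (vsub R3 R2) (cc v w s) <> 0) by (intros; eapply E23_nz; eauto).
  assert (Kp : forall P Q, (forall s, t0 < s < t1 -> dot (vsub Q P) (cc v w s) <> 0) -> 0 < vnorm (vsub Q P)).
  { intros P Q HE. apply vnorm_pos. intro E. apply (HE ((t0 + t1) / 2)); [lra|]. rewrite E. unfold dot, v0; simpl; ring. }
  split; [|split; [|split]].
  - intros t Ht. unfold unique_meet.
    split; [|split]; apply (meet_ok p v w z t0 t1 S); auto.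
  - change (smono t0 t1 (fun t => vnorm (vsub (meetpt p v w R0 R1 t) R0))).
    apply (smono_ext _ _ (fun t => Rabs (lam p v w R0 (vsub R1 R0) t) * vnorm (vsub R1 R0))).
    { intros t Ht. rewrite dist_eq. reflexivity. }
    apply (dist_mono p v w z t0 t1 S); auto.
    + intros; eapply lam01_nz; eauto.
    + eapply mono01; eauto.
  - change (smono t0 t1 (fun t => vnorm (vsub (meetpt p v w R1 R2 t) R1))).
    apply (smono_ext _ _ (fun t => Rabs (lam p v w R1 (vsub R2 R1) t) * vnorm (vsub R2 R1))).
    { intros t Ht. rewrite dist_eq. reflexivity. }
    apply (dist_mono p v w z t0 t1 S); auto.
    + intros; eapply lam12_nz; eauto.
    + eapply mono12; eauto.
  - change (smono t0 t1 (fun t => vnorm (vsub (meetpt p v w R2 R3 t) R2))).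
    apply (smono_ext _ _ (fun t => Rabs (lam p v w R2 (vsub R3 R2) t) * vnorm (vsub R3 R2))).
    { intros t Ht. rewrite dist_eq. reflexivity. }
    apply (dist_mono p v w z t0 t1 S); auto.
    + intros; eapply lam23_nz; eauto.
    + eapply mono23; eauto.
Qed.
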